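(* For every $\beta>1$, \[ \min_{s\ge0}l(s,\beta)=\min_{k\in\mathbb{N}}l(2k,\beta)<l(t,\beta)\qquad\forall\, t\in\bigcup_{k\in\mathbb{N}}(2k,2k+2). \] Moreover: (i) $k_c(\beta)=0$ for every $\beta>\beta^c_0$, and $k_c(\beta)=k+1$ for every $\beta\in(\beta^c_{k+1},\beta^c_k]$, $k\in\mathbb{N}$; (ii) if $\beta>\beta^c_0$, then $0=l(0,\beta)<l(t,\beta)$ for every $t>0$; (iii) if $\beta\in(\beta^c_{k+1},\beta^c_k)$ for some $k\in\mathbb{N}$, then $l(2k+2,\beta)<l(t,\beta)$ for all $t\in[0,+\infty)\setminus\{2k+2\}$; (iv) $l(2k,\beta^c_k)=l(2k+2,\beta^c_k)<l(t,\beta^c_k)$ for every $k\in\mathbb{N}$ and every $t\in[0,+\infty)\setminus\{2k,2k+2\}$; (v) if $\beta\ge\sqrt{3/2}$, then $l(t,\beta)>0$ for $t\in(0,1]$; (vi) for every $\beta>1$, $l(2k_c(\beta),\beta)<l(t,\beta)$ for every $t>2k_c(\beta)$.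
   Context: $\mathbb{N}=\{0,1,2,\dots\}$. For $t\ge 0$ let $q(t)=\lfloor t+1\rfloor/2$ if $\lfloor t\rfloor$ is odd and $q(t)=t-\lfloor t\rfloor/2$ if $\lfloor t\rfloor$ is even, and $p(t)=t+1-q(t)$. For $\beta\ge1$ let $\hat\sigma(t,\beta)\in(0,1)$ be the unique solution $\sigma$ of $\frac{p(t)\sigma}{\sqrt{1-\sigma^2}}+\frac{q(t)\sigma}{\sqrt{\beta^2-\sigma^2}}=1$, and $l(t,\beta)=\frac{p(t)}{\sqrt{1-\hat\sigma^2}}+\frac{\beta^2q(t)}{\sqrt{\beta^2-\hat\sigma^2}}-t-\sqrt2$. For $k\in\mathbb{N}$, $\delta(k,\beta)=l(2k+2,\beta)-l(2k,\beta)$; $k_c(\beta)=\min\{k\in\mathbb{N}:\delta(k,\beta)>0\}$; and $\beta^c_k$ is the unique number in $(1,\sqrt2)$ with $\delta(k,\beta^c_k)=0$ (well defined since $\beta\mapsto\delta(k,\beta)$ is strictly increasing on $[1,\infty)$ with $\delta(k,1)<0<\delta(k,\sqrt2)$). *)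

(* Defs.v *)
From Stdlib Require Import Reals Lra ZArith ClassicalEpsilon.
Open Scope R_scope.

(* floor on R: Int_part x = up x - 1 is the floor of x *)
Definition rfloor (t : R) : Z := Int_part t.

Definition q (t : R) : R :=
  if Z.odd (rfloor t) then IZR (rfloor (t + 1)) / 2
  else t - IZR (rfloor t) / 2.

Definition p (t : R) : R := t + 1 - q t.

(* sigma_hat t beta: the (unique, by the paper) sigma in (0,1) solving the equation;
   chosen with Hilbert's epsilon. *)
Definition sigma_hat (t beta : R) : R :=
  epsilon (inhabits 0) (fun s => 0 < s < 1 /\
    p t * s / sqrt (1 - s ^ 2) + q t * s / sqrt (beta ^ 2 - s ^ 2) = 1).

Definition l (t beta : R) : R :=
  let s := sigma_hat t beta in
  p t / sqrt (1 - s ^ 2) + beta ^ 2 * q t / sqrt (beta ^ 2 - s ^ 2) - t - sqrt 2.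

Definition delta (k : nat) (beta : R) : R :=
  l (2 * INR k + 2) beta - l (2 * INR k) beta.

Definition k_c (beta : R) : nat :=
  epsilon (inhabits 0%nat) (fun k => delta k beta > 0 /\
    forall j : nat, (j < k)%nat -> ~ (delta j beta > 0)).

Definition beta_c (k : nat) : R :=
  epsilon (inhabits 1) (fun b => 1 < b < sqrt 2 /\ delta k b = 0).

(* Main.v *)
Require Import Defs.
From Stdlib Require Import Reals Lra Psatz ZArith ClassicalEpsilon Classical.
Open Scope R_scope.

Definition phi (P Q b s : R) : R := P * sqrt (1 - s ^ 2) + Q * sqrt (b ^ 2 - s ^ 2) + s.
Definition Lam (P Q b s : R) : R := P / sqrt (1 - s ^ 2) + b ^ 2 * Q / sqrt (b ^ 2 - s ^ 2).
Definition fq (P Q b s : R) : R := P * s / sqrt (1 - s ^ 2) + Q * s / sqrt (b ^ 2 - s ^ 2).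

Lemma sqrt_le_of x y : 0 <= y -> x <= y * y -> sqrt x <= y.
Proof.
  intros Hy Hx. destruct (Rle_or_lt 0 x) as [H|H].
  - rewrite <- (sqrt_square y Hy). apply sqrt_le_1_alt. lra.
  - rewrite sqrt_neg_0; lra.
Qed.

Lemma sqrt_ge_of x y : 0 <= y -> y * y <= x -> y <= sqrt x.
Proof.
  intros Hy Hx. rewrite <- (sqrt_square y Hy). apply sqrt_le_1_alt. nra.
Qed.

Lemma sqrt_lt_of x y : 0 < y -> x < y * y -> sqrt x < y.
Proof.
  intros Hy Hx. destruct (Rle_or_lt 0 x) as [H|H].
  - rewrite <- (sqrt_square y) by lra. apply sqrt_lt_1_alt. lra.
  - rewrite sqrt_neg_0; lra.
Qed.

Lemma sqrt_gt_of x y : 0 <= y -> y * y < x -> y < sqrt x.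
Proof.
  intros Hy Hx. rewrite <- (sqrt_square y Hy). apply sqrt_lt_1_alt. nra.
Qed.

Lemma sqr_le_nonneg x y : 0 <= y -> x * x <= y * y -> x <= y.
Proof. intros. nra. Qed.

Lemma sqr_lt_nonneg x y : 0 <= y -> x * x < y * y -> x < y.
Proof. intros. nra. Qed.

Lemma ssq x : 0 <= x -> sqrt x * sqrt x = x.
Proof. apply sqrt_sqrt. Qed.

Lemma tangent_gen P Q b s sg :
  0 <= P -> 0 <= Q -> 1 <= b -> 0 < s < 1 -> 0 <= sg <= 1 ->
  fq P Q b s = 1 ->
  phi P Q b sg <= Lam P Q b s /\ (0 < P -> sg <> s -> phi P Q b sg < Lam P Q b s).
Proof.
  intros HP HQ Hb Hs Hsg Hf. unfold fq, phi, Lam in *.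
  assert (HA : 0 < sqrt (1 - s^2)) by (apply sqrt_lt_R0; nra).
  assert (HB : 0 < sqrt (b^2 - s^2)) by (apply sqrt_lt_R0; nra).
  set (A := sqrt (1 - s^2)) in *. set (B := sqrt (b^2 - s^2)) in *.
  assert (HA2 : A * A = 1 - s^2) by (apply ssq; nra).
  assert (HB2 : B * B = b^2 - s^2) by (apply ssq; nra).
  set (a := sqrt (1 - sg^2)). set (c := sqrt (b^2 - sg^2)).
  assert (Ha0 : 0 <= a) by apply sqrt_pos. assert (Hc0 : 0 <= c) by apply sqrt_pos.
  assert (Ha2 : a * a = 1 - sg^2) by (apply ssq; nra).
  assert (Hc2 : c * c = b^2 - sg^2) by (apply ssq; nra).
  assert (Eq1 : (a * A) * (a * A) = (1 - s * sg) * (1 - s * sg) - (s - sg) * (s - sg)).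
  { replace ((a * A) * (a * A)) with ((a * a) * (A * A)) by ring. rewrite Ha2, HA2. ring. }
  assert (Eq2 : (c * B) * (c * B) = (b^2 - s * sg) * (b^2 - s * sg) - b^2 * ((s - sg) * (s - sg))).
  { replace ((c * B) * (c * B)) with ((c * c) * (B * B)) by ring. rewrite Hc2, HB2. ring. }
  assert (Hss : s * sg <= 1) by (clear - Hs Hsg; nra).
  assert (Hsq : 0 <= (s - sg) * (s - sg)) by (pose proof (Rle_0_sqr (s - sg)); unfold Rsqr in *; lra).
  assert (H1 : a * A <= 1 - s * sg) by (apply sqr_le_nonneg; nra).
  assert (H2 : c * B <= b^2 - s * sg) by (apply sqr_le_nonneg; nra).
  set (iA := / A). set (iB := / B).
  assert (HiA : A * iA = 1) by (unfold iA; field; lra).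
  assert (HiB : B * iB = 1) by (unfold iB; field; lra).
  assert (HiA0 : 0 < iA) by (unfold iA; apply Rinv_0_lt_compat; lra).
  assert (HiB0 : 0 < iB) by (unfold iB; apply Rinv_0_lt_compat; lra).
  replace (P * s / A) with (P * s * iA) in Hf by (unfold iA, Rdiv; ring).
  replace (Q * s / B) with (Q * s * iB) in Hf by (unfold iB, Rdiv; ring).
  replace (P / A) with (P * iA) by (unfold iA, Rdiv; ring).
  replace (b ^ 2 * Q / B) with (b^2 * Q * iB) by (unfold iB, Rdiv; ring).
  assert (Ea : a = a * A * iA) by (rewrite Rmult_assoc, HiA; ring).
  assert (Ec : c = c * B * iB) by (rewrite Rmult_assoc, HiB; ring).
  assert (Ka : a <= (1 - s * sg) * iA) by (rewrite Ea; apply Rmult_le_compat_r; lra).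
  assert (Kc : c <= (b^2 - s * sg) * iB) by (rewrite Ec; apply Rmult_le_compat_r; lra).
  assert (Hsum : sg * (P * s * iA + Q * s * iB) = sg) by (rewrite Hf; ring).
  assert (KPa : P * a <= P * ((1 - s * sg) * iA)) by (apply Rmult_le_compat_l; lra).
  assert (KQc : Q * c <= Q * ((b^2 - s * sg) * iB)) by (apply Rmult_le_compat_l; lra).
  split.
  - nra.
  - intros HP' Hne.
    assert (Hsq' : 0 < (s - sg) * (s - sg)).
    { assert (s - sg <> 0) by (intro; apply Hne; lra). nra. }
    assert (H1' : a * A < 1 - s * sg) by (apply sqr_lt_nonneg; nra).
    assert (Ka' : a < (1 - s * sg) * iA) by (rewrite Ea; apply Rmult_lt_compat_r; lra).
    assert (KPa' : P * a < P * ((1 - s * sg) * iA)) by (apply Rmult_lt_compat_l; lra).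
    nra.
Qed.

Lemma tangent_eq P Q b s :
  1 <= b -> 0 < s < 1 -> fq P Q b s = 1 -> phi P Q b s = Lam P Q b s.
Proof.
  intros Hb Hs Hf. unfold fq, phi, Lam in *.
  assert (HA : 0 < sqrt (1 - s^2)) by (apply sqrt_lt_R0; nra).
  assert (HB : 0 < sqrt (b^2 - s^2)) by (apply sqrt_lt_R0; nra).
  assert (HA2 : sqrt (1 - s^2) * sqrt (1 - s^2) = 1 - s^2) by (apply ssq; nra).
  assert (HB2 : sqrt (b^2 - s^2) * sqrt (b^2 - s^2) = b^2 - s^2) by (apply ssq; nra).
  set (A := sqrt (1 - s^2)) in *. set (B := sqrt (b^2 - s^2)) in *.
  set (iA := / A). set (iB := / B).
  assert (HiA : A * iA = 1) by (unfold iA; field; lra).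
  assert (HiB : B * iB = 1) by (unfold iB; field; lra).
  replace (P * s / A) with (P * s * iA) in Hf by (unfold iA, Rdiv; ring).
  replace (Q * s / B) with (Q * s * iB) in Hf by (unfold iB, Rdiv; ring).
  replace (P / A) with (P * iA) by (unfold iA, Rdiv; ring).
  replace (b ^ 2 * Q / B) with (b^2 * Q * iB) by (unfold iB, Rdiv; ring).
  assert (E1 : P * iA = P * A + s * (P * s * iA)).
  { transitivity (P * iA * (A * A) + P * iA * s^2); [rewrite HA2; ring|].
    replace (P * iA * (A * A)) with (P * A * (A * iA)) by ring. rewrite HiA. ring. }
  assert (E2 : b^2 * Q * iB = Q * B + s * (Q * s * iB)).
  { transitivity (Q * iB * (B * B) + Q * iB * s^2); [rewrite HB2; ring|].
    replace (Q * iB * (B * B)) with (Q * B * (B * iB)) by ring. rewrite HiB. ring. }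
  rewrite E1, E2.
  transitivity (P * A + Q * B + s * (P * s * iA + Q * s * iB)); [rewrite Hf; ring | ring].
Qed.

Lemma cont_fq P Q b a : 1 <= b -> 0 <= a -> a < 1 ->
  continuity_pt (fun s => fq P Q b s - 1) a.
Proof.
  intros Hb Ha0 Ha1. unfold fq.
  assert (C1 : continuity_pt (fun s => 1 - s^2) a) by reg.
  assert (C2 : continuity_pt (fun s => b^2 - s^2) a) by reg.
  assert (D1 : continuity_pt (fun s => sqrt (1 - s^2)) a).
  { apply (continuity_pt_comp (fun s => 1 - s^2) sqrt a C1). apply continuity_pt_sqrt. nra. }
  assert (D2 : continuity_pt (fun s => sqrt (b^2 - s^2)) a).
  { apply (continuity_pt_comp (fun s => b^2 - s^2) sqrt a C2). apply continuity_pt_sqrt. nra. }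
  assert (E1 : continuity_pt (fun s => P * s / sqrt (1 - s^2)) a).
  { apply (continuity_pt_div (fun s => P * s) (fun s => sqrt (1 - s^2)) a); [reg | exact D1 |].
    apply Rgt_not_eq, sqrt_lt_R0. nra. }
  assert (E2 : continuity_pt (fun s => Q * s / sqrt (b^2 - s^2)) a).
  { apply (continuity_pt_div (fun s => Q * s) (fun s => sqrt (b^2 - s^2)) a); [reg | exact D2 |].
    apply Rgt_not_eq, sqrt_lt_R0. nra. }
  apply (continuity_pt_minus (fun s => P * s / sqrt (1 - s^2) + Q * s / sqrt (b^2 - s^2)) (fun _ => 1) a).
  - apply (continuity_pt_plus (fun s => P * s / sqrt (1 - s^2)) (fun s => Q * s / sqrt (b^2 - s^2)) a); assumption.
  - apply continuity_pt_const. intros x y; reflexivity.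
Qed.

Lemma sig_exists P Q b : 1 <= P -> 0 <= Q -> 1 <= b ->
  exists s, 0 < s < 1 /\ fq P Q b s = 1.
Proof.
  intros HP HQ Hb.
  assert (H0 : fq P Q b 0 - 1 < 0).
  { unfold fq. replace (P * 0) with 0 by ring. replace (Q * 0) with 0 by ring. unfold Rdiv. lra. }
  assert (H1 : 0 < fq P Q b (4/5) - 1).
  { unfold fq.
    replace (1 - (4/5)^2) with ((3/5) * (3/5)) by field.
    rewrite sqrt_square by lra.
    assert (HB : 0 < sqrt (b^2 - (4/5)^2)) by (apply sqrt_lt_R0; nra).
    assert (0 <= Q * (4/5) / sqrt (b^2 - (4/5)^2)).
    { apply Rmult_le_pos; [nra|]. left. apply Rinv_0_lt_compat. lra. }
    assert (P * (4/5) / (3/5) = 4/3 * P) by field. lra. }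
  destruct (Ranalysis5.IVT_interv (fun s => fq P Q b s - 1) 0 (4/5)) as [z [Hz Hfz]].
  - intros a Ha. apply cont_fq; lra.
  - lra.
  - exact H0.
  - exact H1.
  - exists z. split; [|lra]. split; [|lra].
    destruct (Rle_lt_or_eq_dec 0 z) as [h|h]; [lra|lra|].
    subst z. lra.
Qed.
Lemma rfloor_eq (t : R) (z : Z) : IZR z <= t < IZR z + 1 -> rfloor t = z.
Proof. intros H. unfold rfloor. symmetry. apply Int_part_spec. lra. Qed.

Lemma odd2 (z : Z) : Z.odd (2 * z) = false.
Proof. rewrite Z.odd_mul. reflexivity. Qed.
Lemma odd2p1 (z : Z) : Z.odd (2 * z + 1) = true.
Proof. rewrite Z.odd_add, Z.odd_mul. simpl. destruct (Z.odd z); reflexivity. Qed.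

Lemma pq_vert (k : nat) (t : R) : 2 * INR k <= t <= 2 * INR k + 1 ->
  p t = INR k + 1 /\ q t = t - INR k.
Proof.
  intros H. rewrite INR_IZR_INZ in *. set (z := Z.of_nat k) in *.
  assert (Hq : q t = t - IZR z).
  { unfold q. destruct (Rlt_or_le t (2 * IZR z + 1)) as [h|h].
    - rewrite (rfloor_eq t (2 * z)) by (rewrite mult_IZR; simpl; lra).
      rewrite odd2. rewrite mult_IZR. simpl. field.
    - assert (t = 2 * IZR z + 1) by lra.
      rewrite (rfloor_eq t (2 * z + 1)) by (rewrite plus_IZR, mult_IZR; simpl; lra).
      rewrite odd2p1. rewrite (rfloor_eq (t + 1) (2 * z + 2)) by (rewrite plus_IZR, mult_IZR; simpl; lra).
      rewrite plus_IZR, mult_IZR. simpl. lra. }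
  split; [unfold p; rewrite Hq; ring | exact Hq].
Qed.

Lemma pq_hor (k : nat) (t : R) : 2 * INR k + 1 <= t <= 2 * INR k + 2 ->
  p t = t - INR k /\ q t = INR k + 1.
Proof.
  intros H. rewrite INR_IZR_INZ in *. set (z := Z.of_nat k) in *.
  assert (Hq : q t = IZR z + 1).
  { unfold q. destruct (Rlt_or_le t (2 * IZR z + 2)) as [h|h].
    - rewrite (rfloor_eq t (2 * z + 1)) by (rewrite plus_IZR, mult_IZR; simpl; lra).
      rewrite odd2p1. rewrite (rfloor_eq (t + 1) (2 * z + 2)) by (rewrite plus_IZR, mult_IZR; simpl; lra).
      rewrite plus_IZR, mult_IZR. simpl. lra.
    - assert (t = 2 * IZR z + 2) by lra.
      rewrite (rfloor_eq t (2 * (z + 1))) by (rewrite mult_IZR, plus_IZR; simpl; lra).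
      rewrite odd2. rewrite mult_IZR, plus_IZR. simpl. lra. }
  split; [unfold p; rewrite Hq; ring | exact Hq].
Qed.

Lemma t_decomp t : 0 <= t -> exists k : nat, 2 * INR k <= t < 2 * INR k + 2.
Proof.
  intros Ht.
  assert (Hb := base_Int_part (t / 2)).
  assert (Hz : (0 <= Int_part (t / 2))%Z).
  { assert (-1 < Int_part (t / 2))%Z by (apply lt_IZR; lra). lia. }
  exists (Z.to_nat (Int_part (t / 2))).
  rewrite INR_IZR_INZ, Z2Nat.id by exact Hz. lra.
Qed.

Lemma pq_pos t : 0 <= t -> 1 <= p t /\ 0 <= q t.
Proof.
  intros Ht. destruct (t_decomp t Ht) as [k HH].
  assert (0 <= INR k) by apply pos_INR.
  destruct (Rle_or_lt t (2 * INR k + 1)).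
  - destruct (pq_vert k t) as [h1 h2]; lra.
  - destruct (pq_hor k t) as [h1 h2]; lra.
Qed.

Lemma lspec t b : 0 <= t -> 1 <= b ->
  0 < sigma_hat t b < 1 /\ fq (p t) (q t) b (sigma_hat t b) = 1 /\
  l t b = phi (p t) (q t) b (sigma_hat t b) - t - sqrt 2 /\
  (forall sg, 0 <= sg <= 1 -> phi (p t) (q t) b sg - t - sqrt 2 <= l t b) /\
  (forall sg, 0 <= sg <= 1 -> sg <> sigma_hat t b -> phi (p t) (q t) b sg - t - sqrt 2 < l t b).
Proof.
  intros Ht Hb. destruct (pq_pos t Ht) as [HP HQ].
  assert (Hs : 0 < sigma_hat t b < 1 /\ fq (p t) (q t) b (sigma_hat t b) = 1).
  { unfold sigma_hat. apply (epsilon_spec (inhabits 0) (fun s => 0 < s < 1 /\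
      p t * s / sqrt (1 - s ^ 2) + q t * s / sqrt (b ^ 2 - s ^ 2) = 1)).
    destruct (sig_exists (p t) (q t) b HP HQ Hb) as [s Hs]. exists s. exact Hs. }
  destruct Hs as [Hs Hf].
  assert (El : l t b = Lam (p t) (q t) b (sigma_hat t b) - t - sqrt 2) by reflexivity.
  rewrite <- tangent_eq in El by assumption.
  split; [exact Hs|]. split; [exact Hf|]. split; [exact El|].
  split.
  - intros sg Hsg. destruct (tangent_gen (p t) (q t) b (sigma_hat t b) sg) as [h1 h2]; try lra; try assumption.
    rewrite El, (tangent_eq (p t) (q t) b (sigma_hat t b)) by assumption. lra.
  - intros sg Hsg Hne. destruct (tangent_gen (p t) (q t) b (sigma_hat t b) sg) as [h1 h2]; try lra; try assumption.
    rewrite El, (tangent_eq (p t) (q t) b (sigma_hat t b)) by assumption. specialize (h2 ltac:(lra) Hne). lra.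
Qed.

Lemma sqrt_lt1 s : 0 < s < 1 -> sqrt (1 - s^2) < 1.
Proof. intros. apply sqrt_lt_of; nra. Qed.

Lemma pq_even (j : nat) : p (2 * INR j) = INR j + 1 /\ q (2 * INR j) = INR j.
Proof. destruct (pq_vert j (2 * INR j)) as [h1 h2]; [lra|]. split; [exact h1|lra]. Qed.

Lemma pq_even2 (j : nat) : p (2 * INR j + 2) = INR j + 2 /\ q (2 * INR j + 2) = INR j + 1.
Proof.
  destruct (pq_vert (S j) (2 * INR j + 2)) as [h1 h2]; rewrite S_INR in *; [lra|]. split; lra.
Qed.

Lemma hor_dec (k : nat) b t1 t2 : 1 <= b -> 2 * INR k + 1 <= t1 -> t1 < t2 -> t2 <= 2 * INR k + 2 ->
  l t2 b < l t1 b.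
Proof.
  intros Hb H1 H12 H2. assert (Hk := pos_INR k).
  destruct (pq_hor k t1) as [P1 Q1]; [lra|]. destruct (pq_hor k t2) as [P2 Q2]; [lra|].
  destruct (lspec t2 b) as [Hs [Hf [El [_ _]]]]; [lra|lra|].
  destruct (lspec t1 b) as [_ [_ [_ [Hle _]]]]; [lra|lra|].
  set (s := sigma_hat t2 b) in *.
  specialize (Hle s ltac:(lra)).
  assert (HA := sqrt_lt1 s Hs).
  unfold phi in *. rewrite P1, Q1 in Hle. rewrite P2, Q2 in El.
  set (A := sqrt (1 - s^2)) in *. set (B := sqrt (b^2 - s^2)) in *.
  assert (0 < (t2 - t1) * (1 - A)) by (apply Rmult_lt_0_compat; lra).
  nra.
Qed.

Lemma vert0 (k : nat) b t : 1 <= b -> 2 * INR k < t <= 2 * INR k + 1 ->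
  l (2 * INR k) b + (t - 2 * INR k) * (sqrt (b^2 - (sigma_hat (2 * INR k) b)^2) - 1) < l t b.
Proof.
  intros Hb Ht. assert (Hk := pos_INR k).
  destruct (pq_even k) as [P0 Q0]. destruct (pq_vert k t) as [P1 Q1]; [lra|].
  destruct (lspec (2 * INR k) b) as [Hs [Hf [El _]]]; [lra|lra|].
  destruct (lspec t b) as [_ [Hft [_ [_ Hlt]]]]; [lra|lra|].
  set (s := sigma_hat (2 * INR k) b) in *.
  assert (HB : 0 < sqrt (b^2 - s^2)) by (apply sqrt_lt_R0; nra).
  assert (Hne : s <> sigma_hat t b).
  { intro E. rewrite <- E in Hft. unfold fq in Hf, Hft. rewrite P0, Q0 in Hf. rewrite P1, Q1 in Hft.
    assert (0 < (t - 2 * INR k) * s / sqrt (b^2 - s^2)).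
    { apply Rdiv_lt_0_compat; [|exact HB]. apply Rmult_lt_0_compat; lra. }
    assert ((INR k + 1) * s / sqrt (1 - s ^ 2) + (t - INR k) * s / sqrt (b ^ 2 - s ^ 2) =
            (INR k + 1) * s / sqrt (1 - s ^ 2) + INR k * s / sqrt (b ^ 2 - s ^ 2) +
            (t - 2 * INR k) * s / sqrt (b^2 - s^2)) by (field; lra).
    lra. }
  specialize (Hlt s ltac:(lra) Hne).
  assert (E : phi (p t) (q t) b s = phi (p (2 * INR k)) (q (2 * INR k)) b s + (t - 2 * INR k) * sqrt (b^2 - s^2)).
  { unfold phi. rewrite P0, Q0, P1, Q1. ring. }
  rewrite E in Hlt. rewrite El. nra.
Qed.

Lemma vert1 (k : nat) b t : 1 <= b -> 2 * INR k <= t <= 2 * INR k + 1 ->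
  l (2 * INR k + 1) b + (2 * INR k + 1 - t) * (1 - sqrt (b^2 - (sigma_hat (2 * INR k + 1) b)^2)) <= l t b.
Proof.
  intros Hb Ht. assert (Hk := pos_INR k).
  destruct (pq_vert k (2 * INR k + 1)) as [P0 Q0]; [lra|]. destruct (pq_vert k t) as [P1 Q1]; [lra|].
  destruct (lspec (2 * INR k + 1) b) as [Hs [Hf [El _]]]; [lra|lra|].
  destruct (lspec t b) as [_ [_ [_ [Hle _]]]]; [lra|lra|].
  set (s := sigma_hat (2 * INR k + 1) b) in *.
  specialize (Hle s ltac:(lra)).
  assert (E : phi (p t) (q t) b s = phi (p (2 * INR k + 1)) (q (2 * INR k + 1)) b s - (2 * INR k + 1 - t) * sqrt (b^2 - s^2)).
  { unfold phi. rewrite P0, Q0, P1, Q1. ring. }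
  rewrite E in Hle. rewrite El. nra.
Qed.

Lemma vert_e (k : nat) b t : 1 <= b -> b^2 <= 2 -> 2 * INR k <= t <= 2 * INR k + 1 ->
  (INR k + 1) * sqrt (2 - b^2) + sqrt (b^2 - 1) - INR k - sqrt 2 <= l t b.
Proof.
  intros Hb Hb2 Ht. assert (Hk := pos_INR k).
  destruct (pq_vert k t) as [P1 Q1]; [lra|].
  destruct (lspec t b) as [_ [_ [_ [Hle _]]]]; [lra|lra|].
  set (e := sqrt (b^2 - 1)).
  assert (He0 : 0 <= e) by apply sqrt_pos.
  assert (He2 : e * e = b^2 - 1) by (apply ssq; nra).
  assert (He1 : e <= 1) by (apply sqrt_le_of; lra).
  specialize (Hle e ltac:(lra)).
  unfold phi in Hle. rewrite P1, Q1 in Hle.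
  replace (1 - e^2) with (2 - b^2) in Hle by nra.
  replace (b^2 - e^2) with 1 in Hle by nra. rewrite sqrt_1 in Hle. lra.
Qed.

Lemma diag_lo (j : nat) b : 1 <= b ->
  sqrt (1 - (sigma_hat (2 * INR j) b)^2) + sqrt (b^2 - (sigma_hat (2 * INR j) b)^2) - 2 < delta j b.
Proof.
  intros Hb. assert (Hk := pos_INR j). unfold delta.
  destruct (pq_even j) as [P0 Q0]. destruct (pq_even2 j) as [P1 Q1].
  destruct (lspec (2 * INR j) b) as [Hs [Hf [El _]]]; [lra|lra|].
  destruct (lspec (2 * INR j + 2) b) as [_ [Hft [_ [_ Hlt]]]]; [lra|lra|].
  set (s := sigma_hat (2 * INR j) b) in *.
  assert (HA : 0 < sqrt (1 - s^2)) by (apply sqrt_lt_R0; nra).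
  assert (HB : 0 < sqrt (b^2 - s^2)) by (apply sqrt_lt_R0; nra).
  assert (Hne : s <> sigma_hat (2 * INR j + 2) b).
  { intro E. rewrite <- E in Hft. unfold fq in Hf, Hft. rewrite P0, Q0 in Hf. rewrite P1, Q1 in Hft.
    assert (0 < s / sqrt (1 - s^2)) by (apply Rdiv_lt_0_compat; lra).
    assert (0 < s / sqrt (b^2 - s^2)) by (apply Rdiv_lt_0_compat; lra).
    assert ((INR j + 2) * s / sqrt (1 - s ^ 2) + (INR j + 1) * s / sqrt (b ^ 2 - s ^ 2) =
            (INR j + 1) * s / sqrt (1 - s ^ 2) + INR j * s / sqrt (b ^ 2 - s ^ 2) +
            s / sqrt (1 - s^2) + s / sqrt (b^2 - s^2)) by (field; lra).
    lra. }
  specialize (Hlt s ltac:(lra) Hne).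
  assert (E : phi (p (2 * INR j + 2)) (q (2 * INR j + 2)) b s = phi (p (2 * INR j)) (q (2 * INR j)) b s + sqrt (1 - s^2) + sqrt (b^2 - s^2)).
  { unfold phi. rewrite P0, Q0, P1, Q1. ring. }
  rewrite E in Hlt. rewrite El. lra.
Qed.

Lemma diag_hi (j : nat) b : 1 <= b ->
  delta j b <= sqrt (1 - (sigma_hat (2 * INR j + 2) b)^2) + sqrt (b^2 - (sigma_hat (2 * INR j + 2) b)^2) - 2.
Proof.
  intros Hb. assert (Hk := pos_INR j). unfold delta.
  destruct (pq_even j) as [P0 Q0]. destruct (pq_even2 j) as [P1 Q1].
  destruct (lspec (2 * INR j + 2) b) as [Hs [Hf [El _]]]; [lra|lra|].
  destruct (lspec (2 * INR j) b) as [_ [_ [_ [Hle _]]]]; [lra|lra|].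
  set (s := sigma_hat (2 * INR j + 2) b) in *.
  specialize (Hle s ltac:(lra)).
  assert (E : phi (p (2 * INR j + 2)) (q (2 * INR j + 2)) b s = phi (p (2 * INR j)) (q (2 * INR j)) b s + sqrt (1 - s^2) + sqrt (b^2 - s^2)).
  { unfold phi. rewrite P0, Q0, P1, Q1. ring. }
  rewrite El, E. lra.
Qed.

Lemma delta_incr (j : nat) b : 1 <= b -> delta j b < delta (S j) b.
Proof.
  intros Hb. pose proof (diag_hi j b Hb) as H1. pose proof (diag_lo (S j) b Hb) as H2.
  rewrite S_INR in H2. replace (2 * (INR j + 1)) with (2 * INR j + 2) in H2 by ring. lra.
Qed.

Lemma frac_lt x y x' y' : 0 < y -> 0 < y' -> x * y' < x' * y -> x / y < x' / y'.
Proof.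
  intros Hy Hy' H. apply (Rmult_lt_reg_r (y * y')); [nra|].
  replace (x / y * (y * y')) with (x * y') by (field; lra).
  replace (x' / y' * (y * y')) with (x' * y) by (field; lra). exact H.
Qed.

Lemma frac_le x y x' y' : 0 < y -> 0 < y' -> x * y' <= x' * y -> x / y <= x' / y'.
Proof.
  intros Hy Hy' H. apply (Rmult_le_reg_r (y * y')); [nra|].
  replace (x / y * (y * y')) with (x * y') by (field; lra).
  replace (x' / y' * (y * y')) with (x' * y) by (field; lra). exact H.
Qed.

Lemma ratio_mono b x y : 1 <= b -> 0 <= x < y -> y < 1 ->
  x / sqrt (b^2 - x^2) < y / sqrt (b^2 - y^2).
Proof.
  intros Hb Hxy Hy.
  assert (H1 : 0 < sqrt (b^2 - x^2)) by (apply sqrt_lt_R0; nra).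
  assert (H2 : 0 < sqrt (b^2 - y^2)) by (apply sqrt_lt_R0; nra).
  apply frac_lt; try assumption.
  apply sqr_lt_nonneg; [nra|].
  replace (x * sqrt (b ^ 2 - y ^ 2) * (x * sqrt (b ^ 2 - y ^ 2))) with (x * x * (sqrt (b ^ 2 - y ^ 2) * sqrt (b ^ 2 - y ^ 2))) by ring.
  replace (y * sqrt (b ^ 2 - x ^ 2) * (y * sqrt (b ^ 2 - x ^ 2))) with (y * y * (sqrt (b ^ 2 - x ^ 2) * sqrt (b ^ 2 - x ^ 2))) by ring.
  rewrite !ssq by nra.
  assert (Hxy2 : x * x < y * y) by nra.
  assert (0 < b^2 * (y * y - x * x)) by (apply Rmult_lt_0_compat; nra).
  nra.
Qed.

Lemma fq_mono P Q b x y : 0 < P -> 0 <= Q -> 1 <= b -> 0 <= x < y -> y < 1 ->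
  fq P Q b x < fq P Q b y.
Proof.
  intros HP HQ Hb Hxy Hy. unfold fq.
  pose proof (ratio_mono 1 x y ltac:(lra) Hxy Hy) as R1.
  pose proof (ratio_mono b x y Hb Hxy Hy) as R2.
  replace (1^2) with 1 in * by ring.
  unfold Rdiv in *. rewrite !Rmult_assoc. nra.
Qed.

Lemma Hl_nn e : 0 <= e <= 1 -> 0 <= (16)*e + (-32)*e^2 + (4)*e^3 + (77/4)*e^4 + (-13)*e^5 + (121/8)*e^6 + (23/8)*e^7 + (-3/2)*e^8 + (15/8)*e^9 + (-1)*e^10 + (-1/4)*e^11 + (1/8)*e^12.
Proof.
  intros He.
  assert (0 <= e^0 * (1 - e)^12) by (apply Rmult_le_pos; apply pow_le; lra).
  assert (0 <= e^1 * (1 - e)^11) by (apply Rmult_le_pos; apply pow_le; lra).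
  assert (0 <= e^2 * (1 - e)^10) by (apply Rmult_le_pos; apply pow_le; lra).
  assert (0 <= e^3 * (1 - e)^9) by (apply Rmult_le_pos; apply pow_le; lra).
  assert (0 <= e^4 * (1 - e)^8) by (apply Rmult_le_pos; apply pow_le; lra).
  assert (0 <= e^5 * (1 - e)^7) by (apply Rmult_le_pos; apply pow_le; lra).
  assert (0 <= e^6 * (1 - e)^6) by (apply Rmult_le_pos; apply pow_le; lra).
  assert (0 <= e^7 * (1 - e)^5) by (apply Rmult_le_pos; apply pow_le; lra).
  assert (0 <= e^8 * (1 - e)^4) by (apply Rmult_le_pos; apply pow_le; lra).
  assert (0 <= e^9 * (1 - e)^3) by (apply Rmult_le_pos; apply pow_le; lra).
  assert (0 <= e^10 * (1 - e)^2) by (apply Rmult_le_pos; apply pow_le; lra).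
  assert (0 <= e^11 * (1 - e)^1) by (apply Rmult_le_pos; apply pow_le; lra).
  assert (0 <= e^12 * (1 - e)^0) by (apply Rmult_le_pos; apply pow_le; lra).
  assert (E : (16)*e + (-32)*e^2 + (4)*e^3 + (77/4)*e^4 + (-13)*e^5 + (121/8)*e^6 + (23/8)*e^7 + (-3/2)*e^8 + (15/8)*e^9 + (-1)*e^10 + (-1/4)*e^11 + (1/8)*e^12 = (0/1) * (e^0 * (1 - e)^12) + (16/1) * (e^1 * (1 - e)^11) + (144/1) * (e^2 * (1 - e)^10) + (564/1) * (e^3 * (1 - e)^9) + (5021/4) * (e^4 * (1 - e)^8) + (1725/1) * (e^5 * (1 - e)^7) + (11769/8) * (e^6 * (1 - e)^6) + (5845/8) * (e^7 * (1 - e)^5) + (785/4) * (e^8 * (1 - e)^4) + (689/8) * (e^9 * (1 - e)^3) + (405/4) * (e^10 * (1 - e)^2) + (115/2) * (e^11 * (1 - e)^1) + (23/2) * (e^12 * (1 - e)^0)) by field.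
  rewrite E. lra.
Qed.

Lemma Hu_nn e : 0 <= e <= 1 -> 0 <= (16)*e + (-32)*e^2 + (4)*e^3 + (81/4)*e^4 + (-9)*e^5 + (45/8)*e^6 + (35/8)*e^7 + (-17/8)*e^8 + (-1/2)*e^9 + (1/8)*e^10.
Proof.
  intros He.
  assert (0 <= e^0 * (1 - e)^10) by (apply Rmult_le_pos; apply pow_le; lra).
  assert (0 <= e^1 * (1 - e)^9) by (apply Rmult_le_pos; apply pow_le; lra).
  assert (0 <= e^2 * (1 - e)^8) by (apply Rmult_le_pos; apply pow_le; lra).
  assert (0 <= e^3 * (1 - e)^7) by (apply Rmult_le_pos; apply pow_le; lra).
  assert (0 <= e^4 * (1 - e)^6) by (apply Rmult_le_pos; apply pow_le; lra).
  assert (0 <= e^5 * (1 - e)^5) by (apply Rmult_le_pos; apply pow_le; lra).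
  assert (0 <= e^6 * (1 - e)^4) by (apply Rmult_le_pos; apply pow_le; lra).
  assert (0 <= e^7 * (1 - e)^3) by (apply Rmult_le_pos; apply pow_le; lra).
  assert (0 <= e^8 * (1 - e)^2) by (apply Rmult_le_pos; apply pow_le; lra).
  assert (0 <= e^9 * (1 - e)^1) by (apply Rmult_le_pos; apply pow_le; lra).
  assert (0 <= e^10 * (1 - e)^0) by (apply Rmult_le_pos; apply pow_le; lra).
  assert (E : (16)*e + (-32)*e^2 + (4)*e^3 + (81/4)*e^4 + (-9)*e^5 + (45/8)*e^6 + (35/8)*e^7 + (-17/8)*e^8 + (-1/2)*e^9 + (1/8)*e^10 = (0/1) * (e^0 * (1 - e)^10) + (16/1) * (e^1 * (1 - e)^9) + (112/1) * (e^2 * (1 - e)^8) + (324/1) * (e^3 * (1 - e)^7) + (1985/4) * (e^4 * (1 - e)^6) + (841/2) * (e^5 * (1 - e)^5) + (1443/8) * (e^6 * (1 - e)^4) + (271/8) * (e^7 * (1 - e)^3) + (45/2) * (e^8 * (1 - e)^2) + (187/8) * (e^9 * (1 - e)^1) + (27/4) * (e^10 * (1 - e)^0)) by field.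
  rewrite E. lra.
Qed.

Lemma C1_nn e : 0 <= e <= 1 -> 0 <= (2) + (12)*e + (-17)*e^2 + (-11)*e^3 + (12)*e^4 + (1)*e^5 + (4)*e^6 + (2)*e^7 + (-1)*e^8.
Proof.
  intros He.
  assert (0 <= e^0 * (1 - e)^8) by (apply Rmult_le_pos; apply pow_le; lra).
  assert (0 <= e^1 * (1 - e)^7) by (apply Rmult_le_pos; apply pow_le; lra).
  assert (0 <= e^2 * (1 - e)^6) by (apply Rmult_le_pos; apply pow_le; lra).
  assert (0 <= e^3 * (1 - e)^5) by (apply Rmult_le_pos; apply pow_le; lra).
  assert (0 <= e^4 * (1 - e)^4) by (apply Rmult_le_pos; apply pow_le; lra).
  assert (0 <= e^5 * (1 - e)^3) by (apply Rmult_le_pos; apply pow_le; lra).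
  assert (0 <= e^6 * (1 - e)^2) by (apply Rmult_le_pos; apply pow_le; lra).
  assert (0 <= e^7 * (1 - e)^1) by (apply Rmult_le_pos; apply pow_le; lra).
  assert (0 <= e^8 * (1 - e)^0) by (apply Rmult_le_pos; apply pow_le; lra).
  assert (E : (2) + (12)*e + (-17)*e^2 + (-11)*e^3 + (12)*e^4 + (1)*e^5 + (4)*e^6 + (2)*e^7 + (-1)*e^8 = (2/1) * (e^0 * (1 - e)^8) + (28/1) * (e^1 * (1 - e)^7) + (123/1) * (e^2 * (1 - e)^6) + (251/1) * (e^3 * (1 - e)^5) + (262/1) * (e^4 * (1 - e)^4) + (131/1) * (e^5 * (1 - e)^3) + (22/1) * (e^6 * (1 - e)^2) + (4/1) * (e^7 * (1 - e)^1) + (4/1) * (e^8 * (1 - e)^0)) by field.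
  rewrite E. lra.
Qed.

Lemma C2_nn e : 0 <= e <= 1 -> 0 <= (2) + (12)*e + (-17)*e^2 + (-11)*e^3 + (13)*e^4 + (4)*e^5 + (-1)*e^6.
Proof.
  intros He.
  assert (0 <= e^0 * (1 - e)^6) by (apply Rmult_le_pos; apply pow_le; lra).
  assert (0 <= e^1 * (1 - e)^5) by (apply Rmult_le_pos; apply pow_le; lra).
  assert (0 <= e^2 * (1 - e)^4) by (apply Rmult_le_pos; apply pow_le; lra).
  assert (0 <= e^3 * (1 - e)^3) by (apply Rmult_le_pos; apply pow_le; lra).
  assert (0 <= e^4 * (1 - e)^2) by (apply Rmult_le_pos; apply pow_le; lra).
  assert (0 <= e^5 * (1 - e)^1) by (apply Rmult_le_pos; apply pow_le; lra).
  assert (0 <= e^6 * (1 - e)^0) by (apply Rmult_le_pos; apply pow_le; lra).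
  assert (E : (2) + (12)*e + (-17)*e^2 + (-11)*e^3 + (13)*e^4 + (4)*e^5 + (-1)*e^6 = (2/1) * (e^0 * (1 - e)^6) + (24/1) * (e^1 * (1 - e)^5) + (73/1) * (e^2 * (1 - e)^4) + (81/1) * (e^3 * (1 - e)^3) + (28/1) * (e^4 * (1 - e)^2) + (1/1) * (e^5 * (1 - e)^1) + (2/1) * (e^6 * (1 - e)^0)) by field.
  rewrite E. lra.
Qed.

Lemma G_nn e b c : 0 < e -> e < 1 -> 0 < c -> c * c = 1 - e * e -> 0 < b -> b * b = 1 + e * e ->
  0 <= ((-2) + (2)*e + (-6)*e^2 + (6)*e^3 + (9)*e^4 + (-2)*e^5 + (-1)*e^6) + b * ((6)*e + (-6)*e^2 + (-4)*e^3 + (6)*e^4 + (2)*e^5) + c * ((2)*e + (-10)*e^2 + (4)*e^3 + (2)*e^4 + (-2)*e^5) + c * b * ((2) + (6)*e + (-10)*e^2 + (-4)*e^3 + (2)*e^4).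
Proof.
  intros He0 He1 Hc Hc2 Hb Hb2.
  assert (He2 : e * e <= 1) by nra.
  assert (E2 : e^2 = e * e) by ring.
  assert (E4 : 0 <= e^4) by (apply pow_le; lra).
  assert (E6 : 0 <= e^6) by (apply pow_le; lra).
  assert (Ecl : c * c - ((1) + (-1/2)*e^2 + (-1/2)*e^4) * ((1) + (-1/2)*e^2 + (-1/2)*e^4) = e^4 * (3/4 - e^2/2 - e^4/4)) by (rewrite Hc2; field).
  assert (Ecu : ((1) + (-1/2)*e^2) * ((1) + (-1/2)*e^2) - c * c = e^4 / 4) by (rewrite Hc2; field).
  assert (Ebl : b * b - ((1) + (1/2)*e^2 + (-1/8)*e^4) * ((1) + (1/2)*e^2 + (-1/8)*e^4) = e^6 * (1/8 - e^2/64)) by (rewrite Hb2; field).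
  assert (e^4 <= 1) by (replace (e^4) with ((e*e)*(e*e)) by ring; nra).
  assert (e^2 <= 1) by nra.
  assert (Fcl : 0 <= e^4 * (3/4 - e^2/2 - e^4/4)) by (apply Rmult_le_pos; lra).
  assert (Fbl : 0 <= e^6 * (1/8 - e^2/64)) by (apply Rmult_le_pos; lra).
  assert (Hcl : ((1) + (-1/2)*e^2 + (-1/2)*e^4) <= c).
  { destruct (Rle_or_lt ((1) + (-1/2)*e^2 + (-1/2)*e^4) 0) as [h|h]; [lra|]. apply sqr_le_nonneg; lra. }
  assert (Hcu : c <= ((1) + (-1/2)*e^2)).
  { apply sqr_le_nonneg; [nra|lra]. }
  assert (Hbl : ((1) + (1/2)*e^2 + (-1/8)*e^4) <= b).
  { apply sqr_le_nonneg; lra. }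
  assert (Cb : 0 <= ((6)*e + (-6)*e^2 + (-4)*e^3 + (6)*e^4 + (2)*e^5) + c * ((2) + (6)*e + (-10)*e^2 + (-4)*e^3 + (2)*e^4)).
  { destruct (Rle_or_lt 0 ((2) + (6)*e + (-10)*e^2 + (-4)*e^3 + (2)*e^4)) as [h|h].
    - assert (0 <= (c - ((1) + (-1/2)*e^2 + (-1/2)*e^4)) * ((2) + (6)*e + (-10)*e^2 + (-4)*e^3 + (2)*e^4)) by (apply Rmult_le_pos; lra).
      pose proof (C1_nn e ltac:(lra)). lra.
    - assert (0 <= (((1) + (-1/2)*e^2) - c) * (- ((2) + (6)*e + (-10)*e^2 + (-4)*e^3 + (2)*e^4))) by (apply Rmult_le_pos; lra).
      pose proof (C2_nn e ltac:(lra)). lra. }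
  assert (Bb : 0 <= (b - ((1) + (1/2)*e^2 + (-1/8)*e^4)) * (((6)*e + (-6)*e^2 + (-4)*e^3 + (6)*e^4 + (2)*e^5) + c * ((2) + (6)*e + (-10)*e^2 + (-4)*e^3 + (2)*e^4))) by (apply Rmult_le_pos; lra).
  destruct (Rle_or_lt 0 ((2) + (8)*e + (-19)*e^2 + (3)*e^3 + (-5/4)*e^4 + (-19/4)*e^5 + (9/4)*e^6 + (1/2)*e^7 + (-1/4)*e^8)) as [h|h].
  - assert (0 <= (c - ((1) + (-1/2)*e^2 + (-1/2)*e^4)) * ((2) + (8)*e + (-19)*e^2 + (3)*e^3 + (-5/4)*e^4 + (-19/4)*e^5 + (9/4)*e^6 + (1/2)*e^7 + (-1/4)*e^8)) by (apply Rmult_le_pos; lra).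
    pose proof (Hl_nn e ltac:(lra)). lra.
  - assert (0 <= (((1) + (-1/2)*e^2) - c) * (- ((2) + (8)*e + (-19)*e^2 + (3)*e^3 + (-5/4)*e^4 + (-19/4)*e^5 + (9/4)*e^6 + (1/2)*e^7 + (-1/4)*e^8))) by (apply Rmult_le_pos; lra).
    pose proof (Hu_nn e ltac:(lra)). lra.
Qed.

Lemma crux s e A B c b : 0 < s -> s < e -> e < 1 -> 0 < A -> A * A = 1 - s * s ->
  0 < B -> B * B = b * b - s * s -> 0 < c -> c * c = 1 - e * e -> 0 < b -> b * b = 1 + e * e ->
  c * (1 + e) * (A + B - 1 - c) <= e * (1 + c) * (1 + e - A - s).
Proof.
  intros Hs Hse He1 HA HA2 HB HB2 Hc Hc2 Hb Hb2.
  assert (He : 0 < e) by lra.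
  assert (HAc : c <= A) by (apply sqr_le_nonneg; nra).
  assert (HA1 : A <= 1) by nra.
  assert (Hb1 : 1 <= b) by nra.
  assert (Hc1 : c <= 1) by nra.
  assert (Z1 : B*B - (b*b - s*s) = 0) by lra.
  assert (Z2 : s*s - (1 - A*A) = 0) by lra.
  assert (Z3 : b*b - (1+e*e) = 0) by lra.
  assert (Z4 : c*c - (1-e*e) = 0) by lra.
  assert (Chord : (1+b)*B <= (1+b) + (1+c)*(A-c)).
  { apply sqr_le_nonneg; [nra|].
    assert (Id : ((1+b)+(1+c)*(A-c))*((1+b)+(1+c)*(A-c)) - (1+b)*(1+b)*(B*B) - ((1+b)*(1+b)-(1+c)*(1+c))*(A-c)*(1-A)
       = (B*B - (b*b - s*s))*((-1) + (-2)*b + (-1)*b^2) + (s*s - (1 - A*A))*(1 + 2*b + 1*b^2) + (b*b - (1+e*e))*((-1)*A + (-2)*b + (-1)*b^2 + 1*c + (-1)*c*A + (-1)*e^2) + (c*c - (1-e*e))*((-2) + (-1)*A + (-2)*b + 1*c + (-1)*c*A + 1*c^2 + (-1)*e^2)) by ring.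
    rewrite Z1, Z2, Z3, Z4 in Id.
    assert (0 <= ((1+b)*(1+b)-(1+c)*(1+c))*(A-c)*(1-A)).
    { apply Rmult_le_pos; [apply Rmult_le_pos|]; nra. }
    lra. }
  assert (Step3 : c*(1+e)*(A+B-1-c)*(1+b) <= c*(1+e)*(A-c)*(2+b+c)).
  { assert (0 <= c*(1+e)) by nra.
    replace (c*(1+e)*(A+B-1-c)*(1+b)) with (c*(1+e)*((1+b)*(A-c) + ((1+b)*B - (1+b)))) by ring.
    replace (c*(1+e)*(A-c)*(2+b+c)) with (c*(1+e)*((1+b)*(A-c) + (1+c)*(A-c))) by ring.
    apply Rmult_le_compat_l; lra. }
  assert (Gn := G_nn e b c He He1 Hc Hc2 Hb Hb2).
  assert (Id2 : (e*(1+c)*(1+b)*(1+e)+c*c*(1+e)*(2+b+c))*(e*(1+c)*(1+b)*(1+e)+c*c*(1+e)*(2+b+c)) - (e*(1+c)*(1+b)+c*(1+e)*(2+b+c))*(e*(1+c)*(1+b)+c*(1+e)*(2+b+c)) - (e*(1+c)*(1+b))*(e*(1+c)*(1+b)) - e*e*(((-2) + (2)*e + (-6)*e^2 + (6)*e^3 + (9)*e^4 + (-2)*e^5 + (-1)*e^6) + b * ((6)*e + (-6)*e^2 + (-4)*e^3 + (6)*e^4 + (2)*e^5) + c * ((2)*e + (-10)*e^2 + (4)*e^3 + (2)*e^4 + (-2)*e^5) + c * b * ((2) + (6)*e + (-10)*e^2 + (-4)*e^3 + (2)*e^4))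
       = (b*b - (1+e*e))*((-1)*c^2 + 1*c^4 + (-2)*e*c + (-2)*e*c^2 + 2*e*c^3 + 2*e*c^4 + (-1)*e^2 + (-4)*e^2*c + 4*e^2*c^3 + 1*e^2*c^4 + 2*e^3 + 4*e^3*c + 4*e^3*c^2 + 2*e^3*c^3 + 1*e^4 + 2*e^4*c + 1*e^4*c^2) + (c*c - (1-e*e))*(5*c^2 + 4*c^2*b + 4*c^3 + 2*c^3*b + 1*c^4 + 6*e*c + 6*e*c*b + 12*e*c^2 + 10*e*c^2*b + 8*e*c^3 + 4*e*c^3*b + 2*e*c^4 + 2*e^2*b + 10*e^2*c + 12*e^2*c*b + 9*e^2*c^2 + 8*e^2*c^2*b + 4*e^2*c^3 + 2*e^2*c^3*b + 1*e^2*c^4 + (-2)*e^3 + 2*e^3*b + 2*e^3*c + 4*e^3*c*b + 2*e^3*c^2 + 2*e^3*c^2*b + (-7)*e^4 + (-6)*e^4*b + (-2)*e^4*c*b + 2*e^5 + (-2)*e^5*b + 2*e^5*c + 1*e^6)) by ring.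
  rewrite Z3, Z4 in Id2.
  assert (L2 : (e*(1+c)*(1+b)+c*(1+e)*(2+b+c))*(e*(1+c)*(1+b)+c*(1+e)*(2+b+c)) + (e*(1+c)*(1+b))*(e*(1+c)*(1+b)) <= (e*(1+c)*(1+b)*(1+e)+c*c*(1+e)*(2+b+c))*(e*(1+c)*(1+b)*(1+e)+c*c*(1+e)*(2+b+c))).
  { assert (0 <= e*e*(((-2) + (2)*e + (-6)*e^2 + (6)*e^3 + (9)*e^4 + (-2)*e^5 + (-1)*e^6) + b * ((6)*e + (-6)*e^2 + (-4)*e^3 + (6)*e^4 + (2)*e^5) + c * ((2)*e + (-10)*e^2 + (4)*e^3 + (2)*e^4 + (-2)*e^5) + c * b * ((2) + (6)*e + (-10)*e^2 + (-4)*e^3 + (2)*e^4))) by (apply Rmult_le_pos; nra). lra. }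
  assert (CS : ((e*(1+c)*(1+b)+c*(1+e)*(2+b+c))*A + (e*(1+c)*(1+b))*s)*((e*(1+c)*(1+b)+c*(1+e)*(2+b+c))*A + (e*(1+c)*(1+b))*s) <= (e*(1+c)*(1+b)+c*(1+e)*(2+b+c))*(e*(1+c)*(1+b)+c*(1+e)*(2+b+c)) + (e*(1+c)*(1+b))*(e*(1+c)*(1+b))).
  { assert (Ecs : ((e*(1+c)*(1+b)+c*(1+e)*(2+b+c))*A + (e*(1+c)*(1+b))*s)*((e*(1+c)*(1+b)+c*(1+e)*(2+b+c))*A + (e*(1+c)*(1+b))*s) + ((e*(1+c)*(1+b)+c*(1+e)*(2+b+c))*s - (e*(1+c)*(1+b))*A)*((e*(1+c)*(1+b)+c*(1+e)*(2+b+c))*s - (e*(1+c)*(1+b))*A) = ((e*(1+c)*(1+b)+c*(1+e)*(2+b+c))*(e*(1+c)*(1+b)+c*(1+e)*(2+b+c)) + (e*(1+c)*(1+b))*(e*(1+c)*(1+b)))*(A*A + s*s)) by ring.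
    replace (A*A + s*s) with 1 in Ecs by lra.
    assert (0 <= ((e*(1+c)*(1+b)+c*(1+e)*(2+b+c))*s - (e*(1+c)*(1+b))*A)*((e*(1+c)*(1+b)+c*(1+e)*(2+b+c))*s - (e*(1+c)*(1+b))*A)) by (apply Rle_0_sqr).
    lra. }
  assert (Lp : 0 <= (e*(1+c)*(1+b)*(1+e)+c*c*(1+e)*(2+b+c))) by (apply Rplus_le_le_0_compat; apply Rmult_le_pos; try apply Rmult_le_pos; try apply Rmult_le_pos; nra).
  assert (Step4 : (e*(1+c)*(1+b)+c*(1+e)*(2+b+c))*A + (e*(1+c)*(1+b))*s <= (e*(1+c)*(1+b)*(1+e)+c*c*(1+e)*(2+b+c))) by (apply sqr_le_nonneg; lra).
  assert (Fin : c*(1+e)*(A+B-1-c)*(1+b) <= e*(1+c)*(1+e-A-s)*(1+b)).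
  { assert (Eq : e*(1+c)*(1+e-A-s)*(1+b) - c*(1+e)*(A-c)*(2+b+c) = (e*(1+c)*(1+b)*(1+e)+c*c*(1+e)*(2+b+c)) - ((e*(1+c)*(1+b)+c*(1+e)*(2+b+c))*A + (e*(1+c)*(1+b))*s)) by ring.
    lra. }
  apply Rmult_le_reg_r in Fin; lra.
Qed.


Lemma mid (k : nat) b : 1 < b ->
  sqrt (b^2 - (sigma_hat (2 * INR k) b)^2) < 1 ->
  1 < sqrt (b^2 - (sigma_hat (2 * INR k + 1) b)^2) ->
  l (2 * INR k + 2) b < (INR k + 1) * sqrt (2 - b^2) + sqrt (b^2 - 1) - INR k - sqrt 2.
Proof.
  intros Hb HB0 HB1. assert (Hk := pos_INR k).
  destruct (lspec (2 * INR k) b) as [Hs0 [Hf0 _]]; [lra|lra|].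
  destruct (lspec (2 * INR k + 1) b) as [Hs1 [Hf1 _]]; [lra|lra|].
  destruct (lspec (2 * INR k + 2) b) as [Hs [Hf [El _]]]; [lra|lra|].
  destruct (pq_even k) as [P0 Q0]. destruct (pq_even2 k) as [P2 Q2].
  destruct (pq_vert k (2 * INR k + 1)) as [P1 Q1]; [lra|].
  set (s0 := sigma_hat (2 * INR k) b) in *. set (s1 := sigma_hat (2 * INR k + 1) b) in *.
  set (s := sigma_hat (2 * INR k + 2) b) in *.
  assert (Hb2 : b^2 < 2).
  { assert (b^2 - s0^2 < 1 * 1).
    { apply (Rle_lt_trans _ (sqrt (b^2 - s0^2) * sqrt (b^2 - s0^2))); [rewrite ssq by nra; lra|].
      assert (0 <= sqrt (b^2 - s0^2)) by apply sqrt_pos. nra. }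
    nra. }
  set (e := sqrt (b^2 - 1)). set (c := sqrt (2 - b^2)).
  assert (He : 0 < e) by (apply sqrt_lt_R0; nra).
  assert (Hc : 0 < c) by (apply sqrt_lt_R0; nra).
  assert (He2 : e * e = b^2 - 1) by (apply ssq; nra).
  assert (Hc2 : c * c = 2 - b^2) by (apply ssq; nra).
  assert (He1 : e < 1) by nra.
  assert (Hs0e : e < s0).
  { assert (b^2 - s0^2 < 1).
    { assert (0 <= sqrt (b^2 - s0^2)) by apply sqrt_pos.
      rewrite <- (ssq (b^2 - s0^2)) by nra. nra. }
    nra. }
  assert (Hs1e : s1 < e).
  { assert (1 < b^2 - s1^2).
    { assert (0 <= sqrt (b^2 - s1^2)) by apply sqrt_pos.
      rewrite <- (ssq (b^2 - s1^2)) by nra. nra. }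
    nra. }
  assert (Fe : forall P Q, fq P Q b e = P * e / c + Q * e).
  { intros P Q. unfold fq. replace (1 - e^2) with (2 - b^2) by nra.
    replace (b^2 - e^2) with 1 by nra. rewrite sqrt_1. fold c. field. lra. }
  assert (C1 : (INR k + 1) * e / c + INR k * e < 1).
  { assert (H : fq (INR k + 1) (INR k) b e < fq (INR k + 1) (INR k) b s0) by (apply fq_mono; lra).
    rewrite P0, Q0 in Hf0. rewrite Fe in H. lra. }
  assert (C2 : 1 < (INR k + 1) * e / c + (INR k + 1) * e).
  { assert (H : fq (INR k + 1) (INR k + 1) b s1 < fq (INR k + 1) (INR k + 1) b e) by (apply fq_mono; lra).
    rewrite P1, Q1 in Hf1. replace (2 * INR k + 1 - INR k) with (INR k + 1) in Hf1 by ring.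
    rewrite Fe in H. lra. }
  assert (Hse : s < e).
  { destruct (Rlt_or_le s e) as [h|h]; [exact h|exfalso].
    assert (1 < fq (p (2 * INR k + 2)) (q (2 * INR k + 2)) b e).
    { rewrite P2, Q2, Fe. assert (0 < e / c) by (apply Rdiv_lt_0_compat; lra).
      replace ((INR k + 2) * e / c) with ((INR k + 1) * e / c + e / c) by (field; lra). lra. }
    destruct (Req_dec s e) as [E|E].
    - rewrite <- E in H. lra.
    - assert (fq (p (2 * INR k + 2)) (q (2 * INR k + 2)) b e < fq (p (2 * INR k + 2)) (q (2 * INR k + 2)) b s).
      { rewrite P2, Q2. apply fq_mono; lra. }
      lra. }
  set (A := sqrt (1 - s^2)). set (B := sqrt (b^2 - s^2)).
  assert (HA : 0 < A) by (apply sqrt_lt_R0; nra).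
  assert (HB : 0 < B) by (apply sqrt_lt_R0; nra).
  assert (HA2 : A * A = 1 - s * s) by (unfold A; rewrite ssq by nra; ring).
  assert (HB2 : B * B = b * b - s * s) by (unfold B; rewrite ssq by nra; ring).
  assert (HAc : c < A) by (apply sqr_lt_nonneg; nra).
  assert (HB1' : 1 < B) by (apply sqr_lt_nonneg; nra).
  assert (Cx := crux s e A B c b ltac:(lra) Hse He1 HA HA2 HB HB2 Hc ltac:(nra) ltac:(lra) ltac:(nra)).
  assert (C1' : (INR k + 1) * e * (1 + c) < c * (1 + e)).
  { assert (Hx : ((INR k + 1) * e / c + INR k * e) * c < 1 * c) by (apply Rmult_lt_compat_r; lra).
    replace (((INR k + 1) * e / c + INR k * e) * c) with ((INR k + 1) * e + INR k * e * c) in Hx by (field; lra).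
    nra. }
  assert (Key : (INR k + 1) * (A + B - 1 - c) < 1 + e - A - s).
  { assert (Hpos : 0 < A + B - 1 - c) by lra.
    assert (H3 : (INR k + 1) * e * (1 + c) * (A + B - 1 - c) < c * (1 + e) * (A + B - 1 - c)) by (apply Rmult_lt_compat_r; lra).
    assert (H4 : (INR k + 1) * (A + B - 1 - c) * (e * (1 + c)) < (1 + e - A - s) * (e * (1 + c))) by nra.
    apply Rmult_lt_reg_r in H4; [exact H4|nra]. }
  rewrite El. unfold phi. rewrite P2, Q2. fold A B. lra.
Qed.

Lemma loc (k : nat) b t : 1 < b -> 2 * INR k < t < 2 * INR k + 2 ->
  l (2 * INR k) b < l t b \/ l (2 * INR k + 2) b < l t b.
Proof.
  intros Hb Ht. assert (Hk := pos_INR k).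
  destruct (Rlt_or_le (2 * INR k + 1) t) as [h|h].
  - right. apply (hor_dec k); lra.
  - destruct (Rle_or_lt 1 (sqrt (b^2 - (sigma_hat (2 * INR k) b)^2))) as [B0|B0].
    + left. pose proof (vert0 k b t ltac:(lra) ltac:(lra)). nra.
    + destruct (Rle_or_lt (sqrt (b^2 - (sigma_hat (2 * INR k + 1) b)^2)) 1) as [B1|B1].
      * right. pose proof (vert1 k b t ltac:(lra) ltac:(lra)).
        assert (l (2 * INR k + 2) b < l (2 * INR k + 1) b) by (apply (hor_dec k); lra).
        nra.
      * right. pose proof (mid k b Hb B0 B1) as M.
        destruct (lspec (2 * INR k) b) as [Hs0 _]; [lra|lra|].
        assert (b^2 <= 2).
        { set (s0 := sigma_hat (2 * INR k) b) in *.
          assert (0 <= sqrt (b^2 - s0^2)) by apply sqrt_pos.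
          assert (b^2 - s0^2 < 1) by (rewrite <- (ssq (b^2 - s0^2)) by nra; nra). nra. }
        pose proof (vert_e k b t ltac:(lra) H ltac:(lra)). lra.
Qed.

Lemma hS (j : nat) b : l (2 * INR (S j)) b = l (2 * INR j + 2) b.
Proof. rewrite S_INR. f_equal. ring. Qed.

Lemma nat_above x : exists n : nat, x < INR n.
Proof.
  destruct (Rle_or_lt 0 x) as [h|h].
  - destruct (t_decomp x h) as [k Hk]. exists (2 * S k)%nat. assert (INR (2 * S k) = 2 * INR k + 2) by (rewrite mult_INR, (S_INR k); simpl; ring). lra.
  - exists 0%nat. simpl. lra.
Qed.

Lemma ev_pos b : 1 < b -> exists J : nat, 0 < delta J b.
Proof.
  intros Hb. destruct (nat_above (2 / (b - 1))) as [J HJ]. exists J.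
  pose proof (diag_lo J b ltac:(lra)) as D.
  destruct (lspec (2 * INR J) b) as [Hs [Hf _]]; [pose proof (pos_INR J); lra|lra|].
  destruct (pq_even J) as [P0 Q0]. rewrite P0, Q0 in Hf. unfold fq in Hf.
  set (s := sigma_hat (2 * INR J) b) in *.
  assert (HJ0 := pos_INR J).
  set (A := sqrt (1 - s^2)) in *. set (B := sqrt (b^2 - s^2)) in *.
  assert (HA : 0 < A) by (apply sqrt_lt_R0; nra).
  assert (HB : 0 < B) by (apply sqrt_lt_R0; nra).
  assert (HA2 : A * A = 1 - s^2) by (unfold A; apply ssq; nra).
  assert (HB2 : B * B = b^2 - s^2) by (unfold B; apply ssq; nra).
  assert (HA1 : A <= 1) by nra.
  assert (HAl : 1 - s^2 <= A) by nra.
  assert (HBl : b - s^2 <= B) by nra.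
  assert (H1 : (INR J + 1) * s / A <= 1).
  { assert (0 <= INR J * s / B) by (apply Rmult_le_pos; [nra| left; apply Rinv_0_lt_compat; lra]). lra. }
  assert (H2 : (INR J + 1) * s <= 1).
  { assert (Hx : (INR J + 1) * s / A * A <= 1 * A) by (apply Rmult_le_compat_r; lra).
    replace ((INR J + 1) * s / A * A) with ((INR J + 1) * s) in Hx by (field; lra). nra. }
  assert (H3 : 2 < (INR J + 1) * (b - 1)).
  { assert (Hx : 2 / (b - 1) * (b - 1) < INR J * (b - 1)) by (apply Rmult_lt_compat_r; lra).
    replace (2 / (b - 1) * (b - 1)) with 2 in Hx by (field; lra). nra. }
  assert (H4 : 2 * s^2 < b - 1).
  { assert (s * ((INR J + 1) * s) <= s * 1) by (apply Rmult_le_compat_l; lra).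
    assert (s^2 * ((INR J + 1) * (b - 1)) <= (b - 1)) by nra.
    nra. }
  lra.
Qed.

Lemma min_ex (P : nat -> Prop) : (exists n, P n) -> exists n, P n /\ forall m, (m < n)%nat -> ~ P m.
Proof.
  intros [n Hn]. revert Hn. induction n as [n IH] using (well_founded_induction Wf_nat.lt_wf).
  intros Hn. destruct (classic (exists m, (m < n)%nat /\ P m)) as [[m [Hm Pm]]|H].
  - exact (IH m Hm Pm).
  - exists n. split; [exact Hn|]. intros m Hm Pm. apply H. exists m. split; assumption.
Qed.

Lemma kc_spec b : 1 < b -> 0 < delta (k_c b) b /\ forall j, (j < k_c b)%nat -> delta j b <= 0.
Proof.
  intros Hb.
  assert (H : delta (k_c b) b > 0 /\ forall j : nat, (j < k_c b)%nat -> ~ (delta j b > 0)).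
  { unfold k_c. apply (epsilon_spec (inhabits 0%nat) (fun k => delta k b > 0 /\
      forall j : nat, (j < k)%nat -> ~ (delta j b > 0))).
    apply min_ex. destruct (ev_pos b Hb) as [J HJ]. exists J. lra. }
  destruct H as [H1 H2]. split; [lra|]. intros j Hj. specialize (H2 j Hj). lra.
Qed.

Lemma delta_lt b j m : 1 <= b -> (j < m)%nat -> delta j b < delta m b.
Proof.
  intros Hb Hjm. induction Hjm as [|m Hm IH].
  - apply delta_incr; exact Hb.
  - pose proof (delta_incr m b Hb). lra.
Qed.

Lemma h_inc b a : (forall j, (a <= j)%nat -> 0 < delta j b) ->
  forall m, (a < m)%nat -> l (2 * INR a) b < l (2 * INR m) b.
Proof.
  intros H m Hm. induction Hm as [|m Hm IH].
  - rewrite hS. specialize (H a (le_n a)). unfold delta in H. lra.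
  - rewrite hS. assert (0 < delta m b) by (apply H; lia). unfold delta in H0. lra.
Qed.

Lemma h_dec_w b a : (forall j, (j < a)%nat -> delta j b <= 0) ->
  forall m, (m <= a)%nat -> l (2 * INR a) b <= l (2 * INR m) b.
Proof.
  intros H m Hm. induction Hm as [|a Ha IH].
  - lra.
  - rewrite hS. assert (delta a b <= 0) by (apply H; lia). unfold delta in H0.
    assert (l (2 * INR a) b <= l (2 * INR m) b) by (apply IH; intros j Hj; apply H; lia). lra.
Qed.

Lemma h_dec_s b a : (forall j, (j < a)%nat -> delta j b < 0) ->
  forall m, (m < a)%nat -> l (2 * INR a) b < l (2 * INR m) b.
Proof.
  intros H m Hm. induction Hm as [|a Ha IH].
  - rewrite hS. assert (delta m b < 0) by (apply H; lia). unfold delta in H0. lra.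
  - rewrite hS. assert (delta a b < 0) by (apply H; lia). unfold delta in H0.
    assert (l (2 * INR a) b < l (2 * INR m) b) by (apply IH; intros j Hj; apply H; lia). lra.
Qed.

Section G.
Lemma G1 b : 1 < b -> forall j, l (2 * INR (k_c b)) b <= l (2 * INR j) b.
Proof.
  intros Hb j. destruct (kc_spec b Hb) as [K1 K2].
  destruct (le_lt_dec j (k_c b)) as [h|h].
  - apply h_dec_w; assumption.
  - left. apply h_inc; [|exact h]. intros i Hi.
    destruct (le_lt_eq_dec _ _ Hi) as [h'|h'].
    + pose proof (delta_lt b (k_c b) i ltac:(lra) h'). lra.
    + subst. exact K1.
Qed.

Lemma G2 b : 1 < b -> forall j, (k_c b < j)%nat -> l (2 * INR (k_c b)) b < l (2 * INR j) b.
Proof.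
  intros Hb j Hj. destruct (kc_spec b Hb) as [K1 K2].
  apply h_inc; [|exact Hj]. intros i Hi.
  destruct (le_lt_eq_dec _ _ Hi) as [h'|h'].
  + pose proof (delta_lt b (k_c b) i ltac:(lra) h'). lra.
  + subst. exact K1.
Qed.
End G.

Lemma G3 b : 1 < b -> forall (k : nat) t, 2 * INR k < t < 2 * INR k + 2 -> l (2 * INR (k_c b)) b < l t b.
Proof.
  intros Hb k t Ht. destruct (loc k b t Hb Ht) as [h|h].
  - pose proof (G1 b Hb k). lra.
  - pose proof (G1 b Hb (S k)). rewrite hS in H. lra.
Qed.

Lemma G4 b : 1 < b -> forall t, 0 <= t -> l (2 * INR (k_c b)) b <= l t b.
Proof.
  intros Hb t Ht. destruct (t_decomp t Ht) as [k Hk].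
  destruct (Req_dec t (2 * INR k)) as [E|E].
  - subst t. apply G1; exact Hb.
  - left. apply (G3 b Hb k). lra.
Qed.

Lemma G5 b : 1 < b -> forall t, t > 2 * INR (k_c b) -> l (2 * INR (k_c b)) b < l t b.
Proof.
  intros Hb t Ht. assert (HK := pos_INR (k_c b)).
  destruct (t_decomp t ltac:(lra)) as [k Hk].
  assert (HkK : (k_c b <= k)%nat).
  { destruct (le_lt_dec (k_c b) k) as [h|h]; [exact h|].
    apply le_INR in h. rewrite S_INR in h. lra. }
  destruct (Req_dec t (2 * INR k)) as [E|E].
  - subst t. apply G2; [exact Hb|].
    destruct (le_lt_eq_dec _ _ HkK) as [h|h]; [exact h|]. subst. lra.
  - destruct (loc k b t Hb ltac:(lra)) as [h|h].
    + pose proof (G1 b Hb k). lra.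
    + pose proof (G2 b Hb (S k) ltac:(lia)). rewrite hS in H. lra.
Qed.

Lemma sig_small t b : 0 <= t -> 1 <= b -> (sigma_hat t b)^2 <= 1/2.
Proof.
  intros Ht Hb. destruct (lspec t b Ht Hb) as [Hs [Hf _]]. destruct (pq_pos t Ht) as [HP HQ].
  unfold fq in Hf. set (s := sigma_hat t b) in *.
  assert (HA : 0 < sqrt (1 - s^2)) by (apply sqrt_lt_R0; nra).
  assert (HB : 0 < sqrt (b^2 - s^2)) by (apply sqrt_lt_R0; nra).
  assert (HA2 : sqrt (1 - s^2) * sqrt (1 - s^2) = 1 - s^2) by (apply ssq; nra).
  assert (0 <= q t * s / sqrt (b^2 - s^2)) by (apply Rmult_le_pos; [nra| left; apply Rinv_0_lt_compat; lra]).
  assert (H1 : p t * s / sqrt (1 - s^2) <= 1) by lra.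
  assert (Hx : p t * s / sqrt (1 - s^2) * sqrt (1 - s^2) <= 1 * sqrt (1 - s^2)) by (apply Rmult_le_compat_r; lra).
  replace (p t * s / sqrt (1 - s^2) * sqrt (1 - s^2)) with (p t * s) in Hx by (field; lra).
  assert (s <= sqrt (1 - s^2)) by nra.
  nra.
Qed.

Lemma l_beta t b1 b2 : 0 <= t -> 1 <= b1 -> b1 <= b2 ->
  l t b1 <= l t b2 /\ l t b2 - l t b1 <= 2 * q t * (b2^2 - b1^2).
Proof.
  intros Ht Hb1 H12. destruct (pq_pos t Ht) as [HP HQ].
  destruct (lspec t b1) as [Hs1 [_ [El1 [Hle1 _]]]]; [lra|lra|].
  destruct (lspec t b2) as [Hs2 [_ [El2 [Hle2 _]]]]; [lra|lra|].
  set (s1 := sigma_hat t b1) in *. set (s2 := sigma_hat t b2) in *.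
  split.
  - specialize (Hle2 s1 ltac:(lra)). rewrite El1. unfold phi in *.
    assert (sqrt (b1^2 - s1^2) <= sqrt (b2^2 - s1^2)) by (apply sqrt_le_1_alt; nra).
    assert (q t * sqrt (b1^2 - s1^2) <= q t * sqrt (b2^2 - s1^2)) by (apply Rmult_le_compat_l; lra).
    lra.
  - specialize (Hle1 s2 ltac:(lra)). rewrite El2. unfold phi in *.
    assert (Hsm := sig_small t b2 Ht ltac:(lra)). fold s2 in Hsm.
    set (X1 := sqrt (b1^2 - s2^2)) in *. set (X2 := sqrt (b2^2 - s2^2)) in *.
    assert (HX1 : X1 * X1 = b1^2 - s2^2) by (apply ssq; nra).
    assert (HX2 : X2 * X2 = b2^2 - s2^2) by (apply ssq; nra).
    assert (HX10 : 1/2 <= X1) by (apply sqrt_ge_of; nra).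
    assert (HX20 : 0 <= X2) by apply sqrt_pos.
    assert (HP2 : (X2 - X1) * (X2 + X1) = b2^2 - b1^2) by (replace ((X2 - X1) * (X2 + X1)) with (X2 * X2 - X1 * X1) by ring; rewrite HX1, HX2; ring).
    assert (HD : X2 - X1 <= 2 * (b2^2 - b1^2)).
    { destruct (Rle_or_lt (X2 - X1) (2 * (b2^2 - b1^2))) as [h|h]; [exact h|].
      assert (Hb12 : 0 <= b2^2 - b1^2) by nra.
      assert ((X2 - X1) * (X2 + X1) >= (2 * (b2^2 - b1^2)) * (1/2)) by nra.
      assert ((X2 - X1) * (X2 + X1) > (2 * (b2^2 - b1^2)) * (X2 + X1)) by (apply Rmult_gt_compat_r; lra).
      nra. }
    assert (q t * (X2 - X1) <= q t * (2 * (b2^2 - b1^2))) by (apply Rmult_le_compat_l; lra).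
    nra.
Qed.

Lemma delta_lip (k : nat) b1 b2 : 1 <= b1 -> b1 <= b2 ->
  Rabs (delta k b2 - delta k b1) <= 2 * (2 * INR k + 1) * (b2^2 - b1^2).
Proof.
  intros Hb1 H12. assert (Hk := pos_INR k). unfold delta.
  destruct (pq_even k) as [P0 Q0]. destruct (pq_even2 k) as [P2 Q2].
  destruct (l_beta (2 * INR k) b1 b2 ltac:(lra) Hb1 H12) as [A1 A2].
  destruct (l_beta (2 * INR k + 2) b1 b2 ltac:(lra) Hb1 H12) as [B1 B2].
  rewrite Q0 in A2. rewrite Q2 in B2.
  apply Rabs_le. split; nra.
Qed.

Lemma cont_lip (f : R -> R) x M : 0 < M ->
  (forall y, Rabs (y - x) < 1 -> Rabs (f y - f x) <= M * Rabs (y - x)) -> continuity_pt f x.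
Proof.
  intros HM H. unfold continuity_pt, continue_in, limit1_in, limit_in. intros eps Heps.
  exists (Rmin 1 (eps / M)). split.
  - apply Rmin_pos; [lra| apply Rdiv_lt_0_compat; lra].
  - intros y [_ Hy]. simpl in *. unfold R_dist in *.
    assert (Hy1 : Rabs (y - x) < 1) by (pose proof (Rmin_l 1 (eps/M)); lra).
    assert (Hy2 : Rabs (y - x) < eps / M) by (pose proof (Rmin_r 1 (eps/M)); lra).
    specialize (H y Hy1).
    assert (M * Rabs (y - x) < M * (eps / M)) by (apply Rmult_lt_compat_l; lra).
    replace (M * (eps / M)) with eps in H0 by (field; lra). lra.
Qed.

Definition gk (k : nat) (b : R) : R := delta k (Rmax 1 b).

Lemma rmax_lip x y : Rabs (Rmax 1 y - Rmax 1 x) <= Rabs (y - x).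
Proof. unfold Rmax. destruct (Rle_dec 1 y); destruct (Rle_dec 1 x); split_Rabs; lra. Qed.

Lemma rmax_bnd x : 1 <= Rmax 1 x <= 1 + Rabs x.
Proof. unfold Rmax. destruct (Rle_dec 1 x); split_Rabs; lra. Qed.

Lemma gk_cont (k : nat) : continuity (gk k).
Proof.
  intros x. assert (Hk := pos_INR k).
  apply (cont_lip _ x (2 * (2 * INR k + 1) * (2 * Rabs x + 4))).
  { assert (0 <= Rabs x) by apply Rabs_pos. nra. }
  intros y Hy. unfold gk.
  assert (Hm := rmax_lip x y). assert (Hx := rmax_bnd x). assert (Hyb := rmax_bnd y).
  assert (Hyx : Rabs y <= Rabs x + 1) by (split_Rabs; lra).
  set (a := Rmax 1 x) in *. set (c := Rmax 1 y) in *.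
  assert (Hsum : a + c <= 2 * Rabs x + 4) by lra.
  assert (HK : 0 <= 2 * (2 * INR k + 1)) by lra.
  destruct (Rle_or_lt a c) as [h|h].
  - pose proof (delta_lip k a c ltac:(lra) h) as D.
    assert (Hca : c - a <= Rabs (y - x)) by (rewrite Rabs_pos_eq in Hm by lra; lra).
    assert ((c - a) * (c + a) <= Rabs (y - x) * (2 * Rabs x + 4)).
    { apply Rmult_le_compat; lra. }
    assert (2 * (2 * INR k + 1) * (c ^ 2 - a ^ 2) <= 2 * (2 * INR k + 1) * (Rabs (y - x) * (2 * Rabs x + 4))).
    { apply Rmult_le_compat_l; [lra|]. nra. }
    nra.
  - pose proof (delta_lip k c a ltac:(lra) ltac:(lra)) as D.
    rewrite Rabs_minus_sym in D.
    assert (Hca : a - c <= Rabs (y - x)) by (rewrite Rabs_left in Hm by lra; lra).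
    assert ((a - c) * (c + a) <= Rabs (y - x) * (2 * Rabs x + 4)).
    { apply Rmult_le_compat; lra. }
    assert (2 * (2 * INR k + 1) * (a ^ 2 - c ^ 2) <= 2 * (2 * INR k + 1) * (Rabs (y - x) * (2 * Rabs x + 4))).
    { apply Rmult_le_compat_l; [lra|]. nra. }
    nra.
Qed.

Lemma l_one t : 0 <= t -> l t 1 = sqrt ((t + 1)^2 + 1) - t - sqrt 2.
Proof.
  intros Ht. destruct (lspec t 1 Ht ltac:(lra)) as [Hs [Hf [El _]]].
  destruct (pq_pos t Ht) as [HP HQ].
  rewrite El. unfold fq, phi in *. replace (1^2) with 1 in * by ring.
  set (s := sigma_hat t 1) in *.
  assert (HA : 0 < sqrt (1 - s^2)) by (apply sqrt_lt_R0; nra).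
  assert (HA2 : sqrt (1 - s^2) * sqrt (1 - s^2) = 1 - s^2) by (apply ssq; nra).
  set (A := sqrt (1 - s^2)) in *.
  assert (Hpq : p t + q t = t + 1) by (unfold p; ring).
  assert (H1 : (t + 1) * s = A).
  { replace (p t * s / A + q t * s / A) with ((p t + q t) * s / A) in Hf by (field; lra).
    rewrite Hpq in Hf.
    assert (E : (t + 1) * s = (t + 1) * s / A * A) by (field; lra). rewrite E, Hf. ring. }
  assert (Hphi : p t * A + q t * A + s = s * ((t + 1)^2 + 1)).
  { replace (p t * A + q t * A) with ((t + 1) * A) by (rewrite <- Hpq; ring). rewrite <- H1. ring. }
  rewrite Hphi. f_equal. f_equal.
  assert (Hs2 : s^2 * ((t + 1)^2 + 1) = 1) by nra.
  assert (E : (t + 1)^2 + 1 = (s * ((t + 1)^2 + 1)) * (s * ((t + 1)^2 + 1))).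
  { transitivity (((t + 1)^2 + 1) * (s^2 * ((t + 1)^2 + 1))); [rewrite Hs2; ring | ring]. }
  symmetry. rewrite E at 1. apply sqrt_square. nra.
Qed.

Lemma delta_one (k : nat) : delta k 1 < 0.
Proof.
  assert (Hk := pos_INR k). unfold delta.
  rewrite !l_one by lra.
  set (a := 2 * INR k + 1).
  replace (2 * INR k + 2 + 1) with (a + 2) by (unfold a; ring).
  replace (2 * INR k + 1) with a by reflexivity.
  assert (Ha : 0 < a) by (unfold a; lra).
  assert (H1 : a < sqrt (a^2 + 1)) by (apply sqrt_gt_of; nra).
  assert (H2 : sqrt ((a + 2)^2 + 1) < sqrt (a^2 + 1) + 2).
  { apply sqrt_lt_of; [lra|]. rewrite Rmult_plus_distr_l, !Rmult_plus_distr_r, ssq by nra. nra. }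
  unfold a in *. lra.
Qed.

Lemma l_zero b : 1 <= b -> l 0 b = 0 /\ (sigma_hat 0 b)^2 = 1/2.
Proof.
  intros Hb. destruct (lspec 0 b ltac:(lra) Hb) as [Hs [Hf [El _]]].
  destruct (pq_even 0) as [P0 Q0]. replace (2 * INR 0) with 0 in * by (simpl; ring).
  simpl INR in P0, Q0. rewrite P0, Q0 in *. unfold fq, phi in *.
  set (s := sigma_hat 0 b) in *.
  assert (HA : 0 < sqrt (1 - s^2)) by (apply sqrt_lt_R0; nra).
  assert (HA2 : sqrt (1 - s^2) * sqrt (1 - s^2) = 1 - s^2) by (apply ssq; nra).
  set (A := sqrt (1 - s^2)) in *.
  assert (H1 : s = A).
  { replace ((0 + 1) * s / A + 0 * s / sqrt (b ^ 2 - s ^ 2)) with (s / A) in Hf by (field; split; [apply Rgt_not_eq, sqrt_lt_R0; nra | lra]).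
    apply (Rmult_eq_reg_r (/ A)); [|apply Rinv_neq_0_compat; lra]. rewrite Rinv_r by lra. exact Hf. }
  assert (Hs2 : s^2 = 1/2) by nra.
  split; [|exact Hs2].
  rewrite El. rewrite <- H1.
  assert (E2 : sqrt 2 = 2 * s).
  { replace 2 with ((2 * s) * (2 * s)) at 1 by nra. apply sqrt_square. lra. }
  rewrite E2. ring.
Qed.

Lemma sqrt2_bnd : 1.414 < sqrt 2 < 1.4143.
Proof. split; [apply sqrt_gt_of | apply sqrt_lt_of]; lra. Qed.

Lemma delta0_sqrt2 : 0 < delta 0 (sqrt 2).
Proof.
  assert (Hs2 := sqrt2_bnd). unfold delta.
  replace (2 * INR 0) with 0 by (simpl; ring). replace (0 + 2) with 2 by ring.
  destruct (l_zero (sqrt 2) ltac:(lra)) as [L0 _]. rewrite L0.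
  destruct (lspec 2 (sqrt 2) ltac:(lra) ltac:(lra)) as [_ [_ [_ [Hle _]]]].
  specialize (Hle (2/5) ltac:(lra)).
  destruct (pq_even2 0) as [P2 Q2]. replace (2 * INR 0 + 2) with 2 in P2, Q2 by (simpl; ring).
  simpl INR in P2, Q2. rewrite P2, Q2 in Hle. unfold phi in Hle.
  rewrite pow2_sqrt in Hle by lra.
  assert (0.9 <= sqrt (1 - (2/5)^2)) by (apply sqrt_ge_of; lra).
  assert (1.35 <= sqrt (2 - (2/5)^2)) by (apply sqrt_ge_of; lra).
  lra.
Qed.

Lemma delta_sqrt2 (k : nat) : 0 < delta k (sqrt 2).
Proof.
  assert (Hs2 := sqrt2_bnd). pose proof delta0_sqrt2.
  destruct k as [|k]; [exact H|].
  pose proof (delta_lt (sqrt 2) 0 (S k) ltac:(lra) ltac:(lia)). lra.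
Qed.

Lemma delta_step (k : nat) b1 b2 : 1 <= b1 -> b1 < b2 -> (INR k + 1) * (b2 - b1) <= 1 ->
  delta k b1 < delta k b2.
Proof.
  intros Hb1 H12 Hd. assert (Hk := pos_INR k). unfold delta.
  destruct (pq_even k) as [P0 Q0]. destruct (pq_even2 k) as [P2 Q2].
  destruct (lspec (2 * INR k + 2) b1) as [Hs [_ [ElE _]]]; [lra|lra|].
  destruct (lspec (2 * INR k + 2) b2) as [_ [_ [_ [HleE _]]]]; [lra|lra|].
  destruct (lspec (2 * INR k) b2) as [Hs' [Hf' [ElO _]]]; [lra|lra|].
  destruct (lspec (2 * INR k) b1) as [_ [_ [_ [HleO _]]]]; [lra|lra|].
  set (s := sigma_hat (2 * INR k + 2) b1) in *. set (s' := sigma_hat (2 * INR k) b2) in *.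
  specialize (HleE s ltac:(lra)). specialize (HleO s' ltac:(lra)).
  unfold phi in *. rewrite P2, Q2 in ElE, HleE. rewrite P0, Q0 in ElO, HleO.
  set (X1 := sqrt (b1^2 - s^2)) in *. set (X2 := sqrt (b2^2 - s^2)) in *.
  set (Y1 := sqrt (b1^2 - s'^2)) in *. set (Y2 := sqrt (b2^2 - s'^2)) in *.
  assert (HX1 : X1 * X1 = b1^2 - s^2) by (apply ssq; nra).
  assert (HX2 : X2 * X2 = b2^2 - s^2) by (apply ssq; nra).
  assert (HY1 : Y1 * Y1 = b1^2 - s'^2) by (apply ssq; nra).
  assert (HY2 : Y2 * Y2 = b2^2 - s'^2) by (apply ssq; nra).
  assert (HX10 : 0 < X1) by (apply sqrt_lt_R0; nra).
  assert (HX20 : 0 < X2) by (apply sqrt_lt_R0; nra).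
  assert (HY10 : 0 < Y1) by (apply sqrt_lt_R0; nra).
  assert (HY20 : 0 < Y2) by (apply sqrt_lt_R0; nra).
  assert (HX1b : X1 <= b1) by (apply sqr_le_nonneg; nra).
  assert (HX2b : X2 <= b2) by (apply sqr_le_nonneg; nra).
  assert (HXd : b2 - b1 <= X2 - X1).
  { assert (E : (X2 - X1) * (X2 + X1) = (b2 - b1) * (b2 + b1)) by nra.
    assert (X2 + X1 <= b2 + b1) by lra.
    destruct (Rle_or_lt (b2 - b1) (X2 - X1)) as [h|h]; [exact h|].
    assert ((X2 - X1) * (X2 + X1) < (b2 - b1) * (X2 + X1)) by (apply Rmult_lt_compat_r; lra).
    assert ((b2 - b1) * (X2 + X1) <= (b2 - b1) * (b2 + b1)) by (apply Rmult_le_compat_l; lra).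
    lra. }
  assert (HYd : INR k * (Y2 - Y1) < (INR k + 1) * (b2 - b1)).
  { destruct (Req_dec (INR k) 0) as [Z|Z].
    - rewrite Z. lra.
    - assert (K1 : 1 <= INR k).
      { destruct k; [simpl in Z; lra|]. rewrite S_INR. pose proof (pos_INR k). lra. }
      assert (Hs'1 : (INR k + 1) * s' <= 1).
      { unfold fq in Hf'. rewrite P0, Q0 in Hf'.
        assert (HA : 0 < sqrt (1 - s'^2)) by (apply sqrt_lt_R0; nra).
        assert (HA2 : sqrt (1 - s'^2) * sqrt (1 - s'^2) = 1 - s'^2) by (apply ssq; nra).
        assert (HB : 0 < sqrt (b2^2 - s'^2)) by (apply sqrt_lt_R0; nra).
        assert (0 <= INR k * s' / sqrt (b2^2 - s'^2)) by (apply Rmult_le_pos; [nra| left; apply Rinv_0_lt_compat; lra]).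
        assert (H1 : (INR k + 1) * s' / sqrt (1 - s'^2) <= 1) by lra.
        assert (Hx : (INR k + 1) * s' / sqrt (1 - s'^2) * sqrt (1 - s'^2) <= 1 * sqrt (1 - s'^2)) by (apply Rmult_le_compat_r; lra).
        replace ((INR k + 1) * s' / sqrt (1 - s'^2) * sqrt (1 - s'^2)) with ((INR k + 1) * s') in Hx by (field; lra).
        assert (sqrt (1 - s'^2) <= 1) by (apply sqrt_le_of; nra). lra. }
      set (K := INR k) in *. set (d := b2 - b1) in *.
      assert (Hd0 : 0 < d) by (unfold d; lra).
      assert (Kd : K * d <= 1) by (clear - Hd Hd0 K1; unfold d in *; nra).
      assert (Hsq : (K + 1) * (K + 1) * (s' * s') <= 1).
      { assert (0 <= (K + 1) * s') by (apply Rmult_le_pos; lra).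
        replace ((K + 1) * (K + 1) * (s' * s')) with (((K + 1) * s') * ((K + 1) * s')) by ring.
        clear - H Hs'1. nra. }
      assert (L1 : (K + 1) * (K + 1) * (Y1 * Y1) >= (K + 1) * (K + 1) * (b1 * b1) - 1).
      { rewrite HY1. clear - Hsq. nra. }
      assert (R1 : K * K * (b1 * d) <= K * b1).
      { replace (K * K * (b1 * d)) with ((K * b1) * (K * d)) by ring.
        assert (0 <= K * b1) by (apply Rmult_le_pos; lra). clear - H Kd. nra. }
      assert (R2 : K * K * (d * d) <= 1).
      { replace (K * K * (d * d)) with ((K * d) * (K * d)) by ring.
        assert (0 <= K * d) by (apply Rmult_le_pos; lra). clear - H Kd. nra. }
      assert (B11 : b1 <= b1 * b1) by (clear - Hb1; nra).
      assert (Main : (K * (b1 + b2)) * (K * (b1 + b2)) < (2 * (K + 1) * Y1) * (2 * (K + 1) * Y1)).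
      { replace b2 with (b1 + d) by (unfold d; ring).
        assert (Kb : K * b1 >= 1) by (clear - K1 Hb1; nra).
        assert (Kb2 : K * (b1 * b1) >= K * b1) by (clear - K1 B11; nra).
        assert (EL : (K * (b1 + (b1 + d))) * (K * (b1 + (b1 + d))) = 4 * (K * K * (b1 * b1)) + 4 * (K * K * (b1 * d)) + K * K * (d * d)) by ring.
        assert (ER : (2 * (K + 1) * Y1) * (2 * (K + 1) * Y1) = 4 * ((K + 1) * (K + 1) * (Y1 * Y1))) by ring.
        assert (EB : (K + 1) * (K + 1) * (b1 * b1) = K * K * (b1 * b1) + 2 * (K * (b1 * b1)) + b1 * b1) by ring.
        rewrite EL, ER. lra. }
      assert (Lt : K * (b1 + b2) < 2 * (K + 1) * Y1) by (apply sqr_lt_nonneg; nra).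
      assert (E : (Y2 - Y1) * (Y2 + Y1) = (b2 - b1) * (b2 + b1)) by nra.
      assert (Y1 <= Y2) by (apply sqrt_le_1_alt; nra).
      assert (Hpos : 0 <= Y2 - Y1) by lra.
      assert (T1 : K * (Y2 - Y1) * (2 * Y1) <= K * ((Y2 - Y1) * (Y2 + Y1))).
      { replace (K * (Y2 - Y1) * (2 * Y1)) with ((K * (Y2 - Y1)) * (2 * Y1)) by ring.
        replace (K * ((Y2 - Y1) * (Y2 + Y1))) with ((K * (Y2 - Y1)) * (Y2 + Y1)) by ring.
        apply Rmult_le_compat_l; [apply Rmult_le_pos; lra | lra]. }
      assert (T2 : K * ((b2 - b1) * (b2 + b1)) < 2 * (K + 1) * Y1 * (b2 - b1)).
      { replace (K * ((b2 - b1) * (b2 + b1))) with ((K * (b1 + b2)) * (b2 - b1)) by ring.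
        apply Rmult_lt_compat_r; [unfold d in *; lra | exact Lt]. }
      rewrite E in T1. fold d in T1, T2.
      assert (Z2 : K * (Y2 - Y1) * (2 * Y1) < (K + 1) * d * (2 * Y1)).
      { replace ((K + 1) * d * (2 * Y1)) with (2 * (K + 1) * Y1 * d) by ring. lra. }
      apply Rmult_lt_reg_r in Z2; lra. }
  assert (Hk1 : (INR k + 1) * (b2 - b1) <= (INR k + 1) * (X2 - X1)) by (apply Rmult_le_compat_l; lra).
  lra.
Qed.

Lemma delta_mono (k : nat) b1 b2 : 1 <= b1 -> b1 < b2 -> delta k b1 < delta k b2.
Proof.
  intros Hb1 H12. assert (Hk := pos_INR k).
  destruct (nat_above ((b2 - b1) * (INR k + 1))) as [m Hm].
  set (N := INR (S m)).
  assert (HN : 0 < N) by (unfold N; rewrite S_INR; pose proof (pos_INR m); lra).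
  set (d := (b2 - b1) / N).
  assert (Hd0 : 0 < d) by (unfold d; apply Rdiv_lt_0_compat; lra).
  assert (Hd1 : (INR k + 1) * d <= 1).
  { unfold d. assert (N > (b2 - b1) * (INR k + 1)) by (unfold N; rewrite S_INR; lra).
    apply (Rmult_le_reg_r N); [lra|]. replace ((INR k + 1) * ((b2 - b1) / N) * N) with ((b2 - b1) * (INR k + 1)) by (field; lra). lra. }
  assert (Hind : forall i : nat, delta k b1 < delta k (b1 + INR (S i) * d)).
  { induction i as [|i IH].
    - apply delta_step; [lra| simpl; lra | simpl; replace (b1 + 1 * d - b1) with d by ring; lra].
    - assert (delta k (b1 + INR (S i) * d) < delta k (b1 + INR (S (S i)) * d)).
      { apply delta_step.
        - rewrite S_INR. pose proof (pos_INR i). nra.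
        - rewrite (S_INR (S i)). lra.
        - rewrite (S_INR (S i)). replace (b1 + (INR (S i) + 1) * d - (b1 + INR (S i) * d)) with d by ring. lra. }
      lra. }
  specialize (Hind m). fold N in Hind.
  replace (b1 + N * d) with b2 in Hind by (unfold d; field; lra). exact Hind.
Qed.


Lemma bc_spec (k : nat) : 1 < beta_c k < sqrt 2 /\ delta k (beta_c k) = 0.
Proof.
  assert (Hs2 := sqrt2_bnd).
  unfold beta_c. apply (epsilon_spec (inhabits 1) (fun b => 1 < b < sqrt 2 /\ delta k b = 0)).
  destruct (IVT (gk k) 1 (sqrt 2) (gk_cont k) ltac:(lra)) as [z [Hz Hgz]].
  - unfold gk. rewrite Rmax_left by lra. apply delta_one.
  - unfold gk. rewrite Rmax_right by lra. apply delta_sqrt2.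
  - unfold gk in Hgz. rewrite Rmax_right in Hgz by lra.
    exists z. split; [|exact Hgz]. split.
    + destruct (Req_dec z 1) as [E|E]; [|lra]. subst. pose proof (delta_one k). lra.
    + destruct (Req_dec z (sqrt 2)) as [E|E]; [|lra]. subst. pose proof (delta_sqrt2 k). lra.
Qed.

Lemma S1 (k : nat) b : beta_c k < b -> 0 < delta k b.
Proof.
  intros H. destruct (bc_spec k) as [B1 B2]. pose proof (delta_mono k (beta_c k) b ltac:(lra) H). lra.
Qed.

Lemma S2 (k : nat) b : 1 <= b -> b < beta_c k -> delta k b < 0.
Proof.
  intros H1 H. destruct (bc_spec k) as [B1 B2]. pose proof (delta_mono k b (beta_c k) H1 H). lra.
Qed.

Lemma S3 (k : nat) b : 1 <= b -> b <= beta_c k -> delta k b <= 0.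
Proof.
  intros H1 H. destruct (Req_dec b (beta_c k)) as [E|E].
  - subst. destruct (bc_spec k). lra.
  - left. apply S2; lra.
Qed.

Lemma bc_dec (k : nat) : beta_c (S k) < beta_c k.
Proof.
  destruct (bc_spec k) as [B1 B2]. destruct (bc_spec (S k)) as [C1 C2].
  pose proof (delta_incr k (beta_c k) ltac:(lra)).
  destruct (Rlt_or_le (beta_c (S k)) (beta_c k)) as [h|h]; [exact h|].
  pose proof (S3 (S k) (beta_c k) ltac:(lra) h). lra.
Qed.

Lemma bc_anti (j k : nat) : (j <= k)%nat -> beta_c k <= beta_c j.
Proof.
  intros H. induction H as [|k H IH].
  - lra.
  - pose proof (bc_dec k). lra.
Qed.

Lemma part_i_a b : b > beta_c 0 -> k_c b = 0%nat.
Proof.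
  intros H. destruct (bc_spec 0) as [B1 _].
  destruct (kc_spec b ltac:(lra)) as [K1 K2].
  destruct (k_c b) as [|K] eqn:E; [reflexivity|].
  specialize (K2 0%nat ltac:(lia)). pose proof (S1 0 b H). lra.
Qed.

Lemma part_i_b (k : nat) b : beta_c (S k) < b <= beta_c k -> k_c b = S k.
Proof.
  intros [H1 H2]. destruct (bc_spec (S k)) as [B1 _].
  destruct (kc_spec b ltac:(lra)) as [K1 K2].
  destruct (lt_eq_lt_dec (k_c b) (S k)) as [[h|h]|h].
  - assert (beta_c k <= beta_c (k_c b)) by (apply bc_anti; lia).
    pose proof (S3 (k_c b) b ltac:(lra) ltac:(lra)). lra.
  - exact h.
  - specialize (K2 (S k) h). pose proof (S1 (S k) b H1). lra.
Qed.


Lemma INR_2inj (j k : nat) : 2 * INR j = 2 * INR k -> j = k.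
Proof. intros H. apply INR_eq. lra. Qed.

Lemma part_iii (k : nat) b : beta_c (S k) < b < beta_c k ->
  forall t, 0 <= t -> t <> 2 * INR k + 2 -> l (2 * INR k + 2) b < l t b.
Proof.
  intros [H1 H2] t Ht Hne. destruct (bc_spec (S k)) as [B1 _].
  assert (HK : k_c b = S k) by (apply part_i_b; lra).
  assert (Hb : 1 < b) by lra.
  rewrite <- hS. rewrite <- HK.
  destruct (Rlt_or_le (2 * INR (k_c b)) t) as [h|h].
  - apply G5; assumption.
  - rewrite HK in h |- *. rewrite S_INR in h.
    assert (Hneg : forall i, (i < S k)%nat -> delta i b < 0).
    { intros i Hi. apply S2; [lra|]. assert (beta_c k <= beta_c i) by (apply bc_anti; lia). lra. }
    destruct (t_decomp t Ht) as [j Hj].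
    assert (Hjk : (j < S k)%nat).
    { destruct (le_lt_dec (S k) j) as [h'|h']; [|exact h'].
      apply le_INR in h'. rewrite S_INR in h'. lra. }
    destruct (Req_dec t (2 * INR j)) as [E|E].
    + subst t. apply h_dec_s; assumption.
    + destruct (loc j b t Hb ltac:(lra)) as [h'|h'].
      * pose proof (h_dec_s b (S k) Hneg j Hjk). lra.
      * rewrite <- hS in h'. destruct (Nat.eq_dec (S j) (S k)) as [E'|E'].
        -- rewrite E' in h'. exact h'.
        -- pose proof (h_dec_s b (S k) Hneg (S j) ltac:(lia)). lra.
Qed.

Lemma part_iv (k : nat) :
  l (2 * INR k) (beta_c k) = l (2 * INR k + 2) (beta_c k) /\
  forall t, 0 <= t -> t <> 2 * INR k -> t <> 2 * INR k + 2 ->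
    l (2 * INR k) (beta_c k) < l t (beta_c k).
Proof.
  destruct (bc_spec k) as [[B1 B2] B3]. set (b := beta_c k) in *.
  assert (Heq : l (2 * INR k) b = l (2 * INR k + 2) b) by (unfold delta in B3; lra).
  split; [exact Heq|].
  assert (Hlow : forall i, (i < k)%nat -> delta i b < 0).
  { intros i Hi. pose proof (delta_lt b i k ltac:(lra) Hi). lra. }
  assert (Hhigh : forall i, (S k <= i)%nat -> 0 < delta i b).
  { intros i Hi. pose proof (delta_lt b k i ltac:(lra) ltac:(lia)). lra. }
  assert (Hall : forall i, (i <> k)%nat -> (i <> S k)%nat -> l (2 * INR k) b < l (2 * INR i) b).
  { intros i H1 H2. destruct (lt_eq_lt_dec i k) as [[h|h]|h].
    - apply h_dec_s; assumption.
    - contradiction.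
    - rewrite Heq, <- hS. apply h_inc; [exact Hhigh| lia]. }
  assert (Hall2 : forall i, l (2 * INR k) b <= l (2 * INR i) b).
  { intros i. destruct (Nat.eq_dec i k) as [E|E]; [subst; lra|].
    destruct (Nat.eq_dec i (S k)) as [E'|E']; [subst; rewrite hS; lra|].
    left. apply Hall; assumption. }
  intros t Ht H1 H2.
  destruct (t_decomp t Ht) as [j Hj].
  destruct (Req_dec t (2 * INR j)) as [E|E].
  - subst t. apply Hall.
    + intro. subst. lra.
    + intro. subst. rewrite S_INR in H2. lra.
  - destruct (loc j b t ltac:(lra) ltac:(lra)) as [h|h].
    + pose proof (Hall2 j). lra.
    + pose proof (Hall2 (S j)). rewrite hS in H. lra.
Qed.

Lemma part_v b : sqrt (3 / 2) <= b -> forall t, 0 < t <= 1 -> l t b > 0.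
Proof.
  intros Hb t Ht.
  assert (H32 : 1 < sqrt (3/2)) by (apply sqrt_gt_of; lra).
  assert (Hb2 : 3/2 <= b * b).
  { assert (0 <= sqrt (3/2)) by apply sqrt_pos.
    assert (sqrt (3/2) * sqrt (3/2) = 3/2) by (apply ssq; lra). nra. }
  destruct (l_zero b ltac:(lra)) as [L0 S0].
  pose proof (vert0 0 b t ltac:(lra)) as V. replace (2 * INR 0) with 0 in V by (simpl; ring).
  specialize (V ltac:(lra)). rewrite L0, S0 in V.
  assert (1 <= sqrt (b^2 - 1/2)) by (apply sqrt_ge_of; nra).
  assert (0 <= (t - 0) * (sqrt (b^2 - 1/2) - 1)) by (apply Rmult_le_pos; lra).
  lra.
Qed.

Theorem corollary3p15 :
  (forall beta : R, 1 < beta ->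
     exists m : R,
       (exists s, 0 <= s /\ l s beta = m) /\ (forall s, 0 <= s -> m <= l s beta) /\
       (exists k : nat, l (2 * INR k) beta = m) /\ (forall k : nat, m <= l (2 * INR k) beta) /\
       (forall (k : nat) (t : R), 2 * INR k < t < 2 * INR k + 2 -> m < l t beta)) /\
  ((forall beta : R, beta > beta_c 0 -> k_c beta = 0%nat) /\
   (forall (k : nat) (beta : R), beta_c (S k) < beta <= beta_c k -> k_c beta = S k)) /\
  (forall beta : R, beta > beta_c 0 ->
     l 0 beta = 0 /\ forall t : R, t > 0 -> l 0 beta < l t beta) /\
  (forall (k : nat) (beta : R), beta_c (S k) < beta < beta_c k ->
     forall t : R, 0 <= t -> t <> 2 * INR k + 2 -> l (2 * INR k + 2) beta < l t beta) /\
  (forall k : nat,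
     l (2 * INR k) (beta_c k) = l (2 * INR k + 2) (beta_c k) /\
     forall t : R, 0 <= t -> t <> 2 * INR k -> t <> 2 * INR k + 2 ->
       l (2 * INR k) (beta_c k) < l t (beta_c k)) /\
  (forall beta : R, sqrt (3 / 2) <= beta -> forall t : R, 0 < t <= 1 -> l t beta > 0) /\
  (forall beta : R, 1 < beta ->
     forall t : R, t > 2 * INR (k_c beta) -> l (2 * INR (k_c beta)) beta < l t beta).
Proof.
  split; [|split; [split|split; [|split; [|split; [|split]]]]].
  - intros b Hb. exists (l (2 * INR (k_c b)) b). split; [|split; [|split; [|split]]].
    + exists (2 * INR (k_c b)). split; [pose proof (pos_INR (k_c b)); lra | reflexivity].
    + apply G4; exact Hb.
    + exists (k_c b). reflexivity.
    + apply G1; exact Hb.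
    + apply G3; exact Hb.
  - exact part_i_a.
  - exact part_i_b.
  - intros b Hb. destruct (bc_spec 0) as [[B1 _] _].
    destruct (l_zero b ltac:(lra)) as [L0 _]. split; [exact L0|].
    intros t Ht. pose proof (G5 b ltac:(lra) t) as G. rewrite (part_i_a b Hb) in G.
    replace (2 * INR 0) with 0 in G by (simpl; ring). apply G. exact Ht.
  - exact part_iii.
  - exact part_iv.
  - exact part_v.
  - intros b Hb. apply G5. exact Hb.
Qed.
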